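(* For every elementary wqo $E$ given by an expression in normal form, $\mathbf{h}(\mathcal{P}_f(E))=\underline{\mathbf{o}}(E)$.
   Context: A wqo is a quasi-order in which every infinite sequence has $i<j$ with $x_i\le x_j$. $\mathbf{o}(A),\mathbf{h}(A),\mathbf{w}(A)$ are the ranks of the roots of the well-founded trees of finite bad sequences, finite strictly decreasing sequences, and finite sequences of pairwise incomparable elements of $A$ (root: empty sequence, children: one-element extensions; rank $r(s)=\sup\{r(t)+1: t\text{ child of } s\}$). Multiplicatively indecomposable ordinals $\ge\omega$ are those of the form $\omega^{\omega^\gamma}$; an ordinal $\alpha$ is viewed as the wqo $(\alpha,\le)$. Constructions: $E_1\sqcup E_2$ disjoint union ordered by $\le_{E_1}\cup\le_{E_2}$; $E_1\times E_2$ Cartesian product with componentwise order; $E^{<\omega}$ finite words with subword embedding; $\mathsf{M}^\diamond(E)$ finite multisets with multiset embedding, and $\mathsf{M}^\diamond_n(E)$ its restriction to multisets of exactly $n$ elements; $\mathcal{P}_f(E)$ finite subsets with Hoare embedding ($S\le_H S'$ iff $\forall a\in S\,\exists b\in S'\,a\le b$); $E^{\times n}$ the $n$-fold Cartesian power. Elementary wqos are given by expressions of the grammar $E::=\alpha\ (\alpha\ge\omega^\omega\text{ multiplicatively indecomposable})\mid E_1\sqcup E_2\mid E_1\times E_2\mid E^{<\omega}\mid\mathsf{M}^\diamond(E)\mid\mathcal{P}_f(E)$; such an expression is in normal form if no subexpression can be rewritten by the rules $\mathcal{P}_f(\alpha)\to\alpha$; $E\times(E_1\sqcup E_2)\to(E\times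 E_1)\sqcup(E\times E_2)$; $(E_1\sqcup E_2)\times E\to(E_1\times E)\sqcup(E_2\times E)$; $\mathsf{M}^\diamond(E_1\sqcup E_2)\to\mathsf{M}^\diamond(E_1)\times\mathsf{M}^\diamond(E_2)$; $\mathcal{P}_f(E_1\sqcup E_2)\to\mathcal{P}_f(E_1)\times\mathcal{P}_f(E_2)$. Two wqos are wpo-isomorphic ($\cong_{wpo}$) if their quotients by $x\equiv y\iff x\le y\le x$ are isomorphic. Approximation $E'<_{\mathrm{approx}}E$ (by recursion on the expression $E$): if $E=\alpha$, $E'\cong_{wpo}\alpha'$ for some $\alpha'<\alpha$; if $E=E_1\sqcup E_2$ (resp. $E_1\times E_2$), $E'\cong_{wpo}E_1'\sqcup E_2'$ (resp. $E_1'\times E_2'$) with $E_i'<_{\mathrm{approx}}E_i$; if $E=E_1^{<\omega}$, $E'\cong_{wpo}(E_1')^{\times n}$ with $E_1'<_{\mathrm{approx}}E_1$, $n<\omega$; if $E=\mathsf{M}^\diamond(E_1)$, $E'\cong_{wpo}\mathsf{M}^\diamond_n(E_1')$ with $E_1'<_{\mathrm{approx}}E_1$, $n<\omega$; if $E=\mathcal{P}_f(E_1)$, $E'\cong_{wpo}\mathcal{P}_f(E_1')$ with $E_1'<_{\mathrm{approx}}E_1$. For $\mathbf{f}\in\{\mathbf{o},\mathbf{h},\mathbf{w}\}$, the weakened invariant is $\underline{\mathbf{f}}(E)=\sup\{\mathbf{f}(E')+1: E'<_{\mathrm{approx}}E\}$. *)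

(* Defs.v *)
From Stdlib Require Import List.
Import ListNotations.



Record qo := QO { car :> Type; qle : car -> car -> Prop }.
Arguments qle {q}.
Arguments QO : clear implicits.

Definition qlt {A : qo} (x y : A) : Prop := qle x y /\ ~ qle y x.
Definition qequiv {A : qo} (x y : A) : Prop := qle x y /\ qle y x.

(* wpo-isomorphism: the quotients by x == y <-> x<=y<=x are isomorphic.
   Written as a map f : A -> B that preserves and reflects the order
   (hence induces an injective order-embedding of quotients) and is
   surjective up to equivalence (so the induced map is onto). *)
Definition wpo_iso (A B : qo) : Prop :=
  exists f : A -> B,
    (forall x y : A, qle x y <-> qle (f x) (f y)) /\
    (forall b : B, exists a : A, qequiv (f a) b).

(* Ordinals, represented as well-ordered types (alpha, <=).           *)
Record word := WO {
  wcar :> Type;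
  wle : wcar -> wcar -> Prop;
  wle_refl : forall x, wle x x;
  wle_trans : forall x y z, wle x y -> wle y z -> wle x z;
  wle_antisym : forall x y, wle x y -> wle y x -> x = y;
  wle_total : forall x y, wle x y \/ wle y x;
  wlt_wf : well_founded (fun x y => wle x y /\ ~ wle y x)
}.

Definition wlt (W : word) (x y : W) : Prop := @wle W x y /\ ~ @wle W y x.

Definition wordQO (W : word) : qo := QO (wcar W) (@wle W).

(* initial segment below w : its order type is an arbitrary ordinal < alpha *)
Definition seg (W : word) (w : W) : Type := { x : W | wlt W x w }.
Definition segQO (W : word) (w : W) : qo :=
  QO (seg W w) (fun x y => @wle W (proj1_sig x) (proj1_sig y)).

Definition strict_incr {A B : Type} (ltA : A -> A -> Prop) (ltB : B -> B -> Prop)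
  (f : A -> B) : Prop := forall x y, ltA x y -> ltB (f x) (f y).

(* ordinal product beta * delta of the segments below w1 (beta) and w2
   (delta): delta copies of beta, i.e. pairs (d,b) ordered
   lexicographically with d major. *)
Definition lexlt_prod (W : word) (w1 w2 : W)
  (p q : seg W w2 * seg W w1) : Prop :=
  wlt W (proj1_sig (fst p)) (proj1_sig (fst q)) \/
  (proj1_sig (fst p) = proj1_sig (fst q) /\
   wlt W (proj1_sig (snd p)) (proj1_sig (snd q))).

(* alpha is multiplicatively indecomposable:
   for all beta, delta < alpha, beta * delta < alpha
   (beta*delta < alpha <-> it embeds strictly increasingly in a proper
   initial segment of alpha). *)
Definition mult_indec (W : word) : Prop :=
  forall w1 w2 : W, exists w : W, exists f : seg W w2 * seg W w1 -> seg W w,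
    strict_incr (lexlt_prod W w1 w2)
      (fun x y => wlt W (proj1_sig x) (proj1_sig y)) f.

(* The ordinal omega^omega: Cantor normal forms omega^a1 + ... + omega^ak
   with a1 >= ... >= ak, i.e. nonincreasing lists of naturals, ordered
   lexicographically. *)
Fixpoint noninc (l : list nat) : Prop :=
  match l with
  | [] => True
  | x :: l' => (forall y, In y l' -> y <= x) /\ noninc l'
  end.

Fixpoint lexlt (l m : list nat) : Prop :=
  match l, m with
  | [], _ :: _ => True
  | x :: l', y :: m' => x < y \/ (x = y /\ lexlt l' m')
  | _, _ => False
  end.

Definition omega_omega : Type := { l : list nat | noninc l }.

Definition ge_omega_omega (W : word) : Prop :=
  exists f : omega_omega -> W,
    strict_incr (fun x y : omega_omega => lexlt (proj1_sig x) (proj1_sig y))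
      (wlt W) f.

Definition sum_le (A B : qo) (x y : A + B) : Prop :=
  match x, y with
  | inl a, inl a' => qle a a'
  | inr b, inr b' => qle b b'
  | _, _ => False
  end.
Definition sumQO (A B : qo) : qo := QO (A + B)%type (@sum_le A B).

Definition prodQO (A B : qo) : qo :=
  QO (A * B)%type (fun x y => qle (fst x) (fst y) /\ qle (snd x) (snd y)).

Inductive subword (A : qo) : list A -> list A -> Prop :=
| sw_nil : forall v, subword A [] v
| sw_cons : forall x y u v, qle x y -> subword A u v -> subword A (x :: u) (y :: v)
| sw_skip : forall u y v, subword A u v -> subword A u (y :: v).
Definition starQO (A : qo) : qo := QO (list A) (subword A).

(* Finite
   multisets are represented by lists (the order is permutation
   invariant, so the quotient is the one of finite multisets). *)
Inductive mset_emb (A : qo) : list A -> list A -> Prop :=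
| me_nil : forall v, mset_emb A [] v
| me_cons : forall x u v1 y v2,
    qle x y -> mset_emb A u (v1 ++ v2) -> mset_emb A (x :: u) (v1 ++ y :: v2).
Definition msetQO (A : qo) : qo := QO (list A) (mset_emb A).

Definition msetnQO (A : qo) (n : nat) : qo :=
  QO { l : list A | length l = n }
     (fun x y => mset_emb A (proj1_sig x) (proj1_sig y)).

Definition powQO (A : qo) (n : nat) : qo :=
  QO { l : list A | length l = n }
     (fun x y => Forall2 (@qle A) (proj1_sig x) (proj1_sig y)).

(* P_f(E): finite subsets with Hoare embedding (finite subsets
   represented by lists; the Hoare preorder ignores order/duplicates) *)
Definition pfQO (A : qo) : qo :=
  QO (list A) (fun S S' => forall a, In a S -> exists b, In b S' /\ qle a b).

Inductive expr : Type :=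
| EOrd (W : word) (_ : mult_indec W) (_ : ge_omega_omega W)
| ESum (e1 e2 : expr)
| EProd (e1 e2 : expr)
| EStar (e : expr)
| EMset (e : expr)
| EPf (e : expr).

Fixpoint interp (e : expr) : qo :=
  match e with
  | EOrd W _ _ => wordQO W
  | ESum e1 e2 => sumQO (interp e1) (interp e2)
  | EProd e1 e2 => prodQO (interp e1) (interp e2)
  | EStar e1 => starQO (interp e1)
  | EMset e1 => msetQO (interp e1)
  | EPf e1 => pfQO (interp e1)
  end.

Definition is_sum (e : expr) : Prop :=
  match e with ESum _ _ => True | _ => False end.
Definition is_ord (e : expr) : Prop :=
  match e with EOrd _ _ _ => True | _ => False end.

Fixpoint normal_form (e : expr) : Prop :=
  match e with
  | EOrd _ _ _ => True
  | ESum e1 e2 => normal_form e1 /\ normal_form e2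
  | EProd e1 e2 => ~ is_sum e1 /\ ~ is_sum e2 /\ normal_form e1 /\ normal_form e2
  | EStar e1 => normal_form e1
  | EMset e1 => ~ is_sum e1 /\ normal_form e1
  | EPf e1 => ~ is_ord e1 /\ ~ is_sum e1 /\ normal_form e1
  end.

Fixpoint approx (e : expr) (E' : qo) : Prop :=
  match e with
  | EOrd W _ _ => exists w : W, wpo_iso E' (segQO W w)
  | ESum e1 e2 => exists A B, approx e1 A /\ approx e2 B /\ wpo_iso E' (sumQO A B)
  | EProd e1 e2 => exists A B, approx e1 A /\ approx e2 B /\ wpo_iso E' (prodQO A B)
  | EStar e1 => exists A n, approx e1 A /\ wpo_iso E' (powQO A n)
  | EMset e1 => exists A n, approx e1 A /\ wpo_iso E' (msetnQO A n)
  | EPf e1 => exists A, approx e1 A /\ wpo_iso E' (pfQO A)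
  end.

Fixpoint bad {A : qo} (s : list A) : Prop :=
  match s with
  | [] => True
  | x :: s' => (forall y, In y s' -> ~ qle x y) /\ bad s'
  end.

Fixpoint sdecr {A : qo} (s : list A) : Prop :=
  match s with
  | [] => True
  | x :: s' => (forall y, In y s' -> qlt y x) /\ sdecr s'
  end.

Fixpoint antichain {A : qo} (s : list A) : Prop :=
  match s with
  | [] => True
  | x :: s' => (forall y, In y s' -> ~ qle x y /\ ~ qle y x) /\ antichain s'
  end.

Definition o_child (A : qo) (t s : list A) : Prop :=
  (exists x, t = s ++ [x]) /\ bad t.
Definition h_child (A : qo) (t s : list A) : Prop :=
  (exists x, t = s ++ [x]) /\ sdecr t.
Definition w_child (A : qo) (t s : list A) : Prop :=
  (exists x, t = s ++ [x]) /\ antichain t.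

(* Comparison of ranks of nodes in well-founded trees, without a type
   of ordinals: r(a) <= r(b) iff every child a' of a has some child b'
   of b with r(a') <= r(b').  (For well-founded trees this is exactly
   the comparison of the ordinal ranks r(s) = sup{r(t)+1}.) *)
Inductive rank_le {A B : Type} (R : A -> A -> Prop) (S : B -> B -> Prop)
  : A -> B -> Prop :=
| RankLe : forall a b,
    (forall a', R a' a -> exists b', S b' b /\ @rank_le A B R S a' b') ->
    @rank_le A B R S a b.

Definition rank_eq {A B : Type} (R : A -> A -> Prop) (S : B -> B -> Prop)
  (a : A) (b : B) : Prop := rank_le R S a b /\ rank_le S R b a.

(* f(A) = rank of the root [] of the tree given by child relation F A *)

(* Tree whose root rank is sup { f(E') + 1 : P E' }: the root None has
   as children the roots of the f-trees of all E' with P E'. *)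
Definition sup_node (P : qo -> Prop) : Type :=
  option { X : { E' : qo & P E' } & list (projT1 X) }.

Inductive sup_child (P : qo -> Prop) (F : forall A : qo, list A -> list A -> Prop)
  : sup_node P -> sup_node P -> Prop :=
| sc_root : forall X : { E' : qo & P E' }, sup_child P F (Some (existT _ X [])) None
| sc_step : forall (X : { E' : qo & P E' }) (s t : list (projT1 X)),
    F (projT1 X) t s -> sup_child P F (Some (existT _ X t)) (Some (existT _ X s)).

(* Main.v *)
Require Import Defs.
From Stdlib Require Import List Lia Permutation Classical ClassicalEpsilon.
Import ListNotations.


Definition reflQ (A : qo) := forall x : A, qle x x.
Definition transQ (A : qo) := forall x y z : A, qle x y -> qle y z -> qle x z.

Lemma subword_nil_r (A : qo) u : subword A u [] -> u = [].
Proof. intro H; inversion H; auto. Qed.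

Lemma subword_refl (A : qo) : reflQ A -> forall u, subword A u u.
Proof. intros R u; induction u; constructor; auto. Qed.

Lemma subword_trans (A : qo) : transQ A -> forall v w, subword A v w -> forall u, subword A u v -> subword A u w.
Proof.
  intros T v w H; induction H as [v0|x y u0 v0 Hxy H IH|u0 y v0 H IH]; intros u Hu.
  - apply subword_nil_r in Hu; subst; constructor.
  - inversion Hu; subst.
    + constructor.
    + constructor; eauto.
    + apply sw_skip; auto.
  - apply sw_skip; auto.
Qed.

Lemma subword_in (A : qo) u v : subword A u v -> forall a, In a u -> exists b, In b v /\ qle a b.
Proof.
  induction 1; simpl; intros a Ha.
  - contradiction.
  - destruct Ha as [<-|Ha]; [exists y; auto|].
    destruct (IHsubword a Ha) as [b [Hb Hab]]; eauto.
  - destruct (IHsubword a Ha) as [b [Hb Hab]]; eauto.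
Qed.

Lemma subword_length (A : qo) u v : subword A u v -> length u <= length v.
Proof. induction 1; simpl; lia. Qed.

Lemma Forall2_subword (A : qo) u v : Forall2 (@qle A) u v -> subword A u v.
Proof. induction 1; constructor; auto. Qed.

Lemma subword_Forall2 (A : qo) u v : subword A u v -> length u = length v -> Forall2 (@qle A) u v.
Proof.
  induction 1; simpl; intros Hl.
  - destruct v; simpl in *; try discriminate; constructor.
  - constructor; auto.
  - apply subword_length in H; lia.
Qed.

Lemma mset_char (A : qo) u v : mset_emb A u v <-> exists w r, Permutation v (w ++ r) /\ Forall2 (@qle A) u w.
Proof.
  split.
  - induction 1.
    + exists [], v; simpl; auto.
    + destruct IHmset_emb as [w [r [HP HF]]].
      exists (y :: w), r; split; auto.
      rewrite <- Permutation_middle. simpl; constructor; auto.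
  - intros [w [r [HP HF]]]. revert v r HP. induction HF; intros v0 r HP.
    + constructor.
    + simpl in HP.
      assert (Hin : In y v0) by (apply (Permutation_in _ (Permutation_sym HP)); left; auto).
      destruct (in_split _ _ Hin) as [v1 [v2 ->]].
      constructor; auto.
      apply (IHHF _ r).
      apply Permutation_sym. apply Permutation_cons_app_inv with (a := y). apply Permutation_sym; exact HP.
Qed.

Lemma Forall2_refl' (A : qo) : reflQ A -> forall u, Forall2 (@qle A) u u.
Proof. intros R u; induction u; constructor; auto. Qed.

Lemma Forall2_trans' (A : qo) : transQ A -> forall u v w, Forall2 (@qle A) u v -> Forall2 (@qle A) v w -> Forall2 (@qle A) u w.
Proof.
  intros T u v w H; revert w; induction H; intros w0 H'; inversion H'; subst; constructor; eauto.
Qed.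

Lemma Forall2_mset (A : qo) u v : Forall2 (@qle A) u v -> mset_emb A u v.
Proof. intros H; apply mset_char; exists v, []; rewrite app_nil_r; auto. Qed.

Lemma mset_refl (A : qo) : reflQ A -> forall u, mset_emb A u u.
Proof. intros R u; apply Forall2_mset, Forall2_refl'; auto. Qed.

Lemma mset_trans (A : qo) : transQ A -> forall u v w, mset_emb A u v -> mset_emb A v w -> mset_emb A u w.
Proof.
  intros T u v z H1 H2; apply mset_char in H1, H2; apply mset_char.
  destruct H1 as [w1 [r1 [P1 F1]]]. destruct H2 as [w2 [r2 [P2 F2]]].
  destruct (Permutation_Forall2 P1 F2) as [w2' [P3 F3]].
  apply Forall2_app_inv_l in F3 as (a & b & Fa & Fb & ->).
  exists a, (b ++ r2); split.
  - rewrite app_assoc. apply (Permutation_trans P2). apply Permutation_app_tail; auto.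
  - eapply Forall2_trans'; eauto.
Qed.

Lemma mset_perm_l (A : qo) u u' v : mset_emb A u v -> Permutation u u' -> mset_emb A u' v.
Proof.
  intros H HP; apply mset_char in H as [w [r [P F]]]; apply mset_char.
  destruct (Permutation_Forall2 HP F) as [w' [Pw F']].
  exists w', r; split; auto. apply (Permutation_trans P). apply Permutation_app_tail; auto.
Qed.

Lemma mset_app_l (A : qo) a b v : mset_emb A (a ++ b) v -> mset_emb A a v.
Proof.
  intros H; apply mset_char in H as [w [r [P F]]]; apply mset_char.
  apply Forall2_app_inv_l in F as (a' & b' & Fa & Fb & ->).
  exists a', (b' ++ r); split; auto. rewrite app_assoc; auto.
Qed.

Lemma mset_in (A : qo) u v : mset_emb A u v -> forall a, In a u -> exists b, In b v /\ qle a b.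
Proof.
  induction 1; simpl; intros a Ha.
  - contradiction.
  - destruct Ha as [<-|Ha]; [exists y; split; auto; apply in_or_app; simpl; auto|].
    destruct (IHmset_emb a Ha) as [b [Hb Hab]]; exists b; split; auto.
    apply in_app_or in Hb; apply in_or_app; simpl; tauto.
Qed.

Lemma mset_length (A : qo) u v : mset_emb A u v -> length u <= length v.
Proof. induction 1; simpl; rewrite ?length_app in *; simpl; lia. Qed.

Lemma mset_drop_junk (A : qo) u : forall v J, mset_emb A u (v ++ J) ->
  (forall x j, In x u -> In j J -> ~ qle x j) -> mset_emb A u v.
Proof.
  induction u as [|x u IH]; intros v J H HJ; [constructor|].
  inversion H as [|x' u' v1 y v2 Hxy Hu Heq1 Heq2]; subst.
  apply app_eq_app in Heq2 as [m [[E1 E2]|[E1 E2]]].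
  - (* v1 = v ++ m, J = m ++ y :: v2 *)
    subst. exfalso. apply (HJ x y); simpl; auto. apply in_or_app; simpl; auto.
  - (* v = v1 ++ m, y :: v2 = m ++ J *)
    subst. destruct m as [|z m].
    + simpl in E2. subst. exfalso. apply (HJ x y); simpl; auto.
    + simpl in E2. injection E2 as -> ->.
      idtac. constructor; auto.
      apply (IH (v1 ++ m) J); [rewrite <- app_assoc; auto|].
      intros; apply HJ; simpl; auto.
Qed.

Lemma mset_eqlen (A : qo) u v : mset_emb A u v -> length u = length v ->
  exists u', Permutation u u' /\ Forall2 (@qle A) u' v.
Proof.
  intros H Hl; apply mset_char in H as [w [r [P F]]].
  pose proof (Forall2_length F) as Hl2. pose proof (Permutation_length P) as Hl3.
  rewrite length_app in Hl3. destruct r; [|simpl in Hl3; lia].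
  rewrite app_nil_r in P.
  assert (F' : Forall2 (fun a b => @qle A b a) w u) by (clear - F; induction F; constructor; auto).
  destruct (Permutation_Forall2 (Permutation_sym P) F') as [u' [Pu Fu]].
  exists u'; split; auto. clear - Fu; induction Fu; constructor; auto.
Qed.

Lemma mset_map_reflect (A B : qo) (f : A -> B) u : forall v,
  mset_emb B (map f u) (map f v) ->
  (forall x y, In x u -> In y v -> qle (f x) (f y) -> qle x y) -> mset_emb A u v.
Proof.
  induction u as [|x u IH]; intros v H HR; [constructor|].
  simpl in H. inversion H as [|x' u' v1 y v2 Hxy Hu Heq1 Heq2]; subst.
  symmetry in Heq2. apply map_eq_app in Heq2 as (l1 & l2 & -> & <- & E2).
  apply map_eq_cons in E2 as (y' & l2' & -> & <- & <-).
  constructor.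
  - apply HR; simpl; auto. apply in_or_app; simpl; auto.
  - apply IH; [rewrite map_app; auto|].
    intros a b Ha Hb; apply HR; simpl; auto.
    apply in_app_or in Hb; apply in_or_app; simpl; tauto.
Qed.

Lemma hoare_refl (A : qo) : reflQ A -> reflQ (pfQO A).
Proof. intros R S a Ha; exists a; auto. Qed.

Lemma hoare_trans (A : qo) : transQ A -> transQ (pfQO A).
Proof.
  intros T S1 S2 S3 H1 H2 a Ha. simpl in *.
  destruct (H1 a Ha) as [b [Hb Hab]]. destruct (H2 b Hb) as [c [Hc Hbc]]. eauto.
Qed.


Lemma interp_rt (e : expr) : reflQ (interp e) /\ transQ (interp e).
Proof.
  induction e as [W m g|e1 [R1 T1] e2 [R2 T2]|e1 [R1 T1] e2 [R2 T2]|e1 [R1 T1]|e1 [R1 T1]|e1 [R1 T1]]; simpl.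
  - split; [intro; apply wle_refl|intros x y z; apply wle_trans].
  - split; [intros [a|b]; simpl; auto|].
    intros [a|b] [c|d] [u|v]; simpl; try tauto; eauto.
  - split; [intros [a b]; simpl; auto|].
    intros [a b] [c d] [u v]; simpl; intros [? ?] [? ?]; eauto.
  - split; [intro; apply subword_refl; auto|].
    intros x y z H1 H2; eapply subword_trans; eauto.
  - split; [intro; apply mset_refl; auto|]. intros x y z; apply mset_trans; auto.
  - split; [apply hoare_refl; auto|apply hoare_trans; auto].
Qed.

Definition wqo (A : qo) := forall f : nat -> A, exists i j, i < j /\ qle (f i) (f j).

Lemma choice_nat (P : nat -> nat -> Prop) : (forall n, exists m, P n m) -> exists g : nat -> nat, forall n, P n (g n).
Proof.
  intros H. exists (fun n => proj1_sig (constructive_indefinite_description _ (H n))).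
  intro n. exact (proj2_sig (constructive_indefinite_description _ (H n))).
Qed.

Lemma incr_mono (phi : nat -> nat) : (forall k, phi k < phi (S k)) -> forall k l, k < l -> phi k < phi l.
Proof. intros H k l Hkl; induction Hkl; [apply H|]. specialize (H m); lia. Qed.

Lemma extract (P : nat -> Prop) : (forall N, exists j, N <= j /\ P j) ->
  exists phi : nat -> nat, (forall k l, k < l -> phi k < phi l) /\ forall k, P (phi k).
Proof.
  intros H. destruct (choice_nat _ H) as [g Hg].
  exists (fix phi k := match k with 0 => g 0 | S k' => g (S (phi k')) end).
  split.
  - apply incr_mono. intro k. simpl. destruct (Hg (S ((fix phi (k : nat) : nat :=
       match k with 0 => g 0 | S k' => g (S (phi k')) end) k))). lia.
  - intros [|k]; simpl; apply Hg.
Qed.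

Lemma incr_sub (A : qo) : transQ A -> wqo A -> forall f : nat -> A,
  exists phi : nat -> nat, (forall k l, k < l -> phi k < phi l) /\
     forall k l, k < l -> qle (f (phi k)) (f (phi l)).
Proof.
  intros T W f.
  destruct (classic (forall N, exists i, N <= i /\ forall j, i < j -> ~ qle (f i) (f j))) as [Hinf|Hfin].
  - exfalso. destruct (extract _ Hinf) as [phi [Hm Hp]].
    destruct (W (fun k => f (phi k))) as [i [j [Hij Hle]]].
    apply (Hp i (phi j)); auto.
  - apply not_all_ex_not in Hfin as [N HN].
    assert (Hn : forall i, exists j, N <= i -> i < j /\ qle (f i) (f j)).
    { intro i. destruct (classic (N <= i)) as [Hi|Hi]; [|exists 0; tauto].
      destruct (classic (exists j, i < j /\ qle (f i) (f j))) as [[j Hj]|Hj]; [exists j; auto|].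
      exfalso; apply HN; exists i; split; auto. intros j Hij Hle; apply Hj; eauto. }
    destruct (choice_nat _ Hn) as [g Hg].
    set (phi := fix phi k := match k with 0 => N | S k' => g (phi k') end).
    assert (HN' : forall k, N <= phi k /\ phi k < phi (S k) /\ qle (f (phi k)) (f (phi (S k)))).
    { induction k as [|k [IH1 [IH2 IH3]]].
      - simpl. destruct (Hg N) as [H1 H2]; auto.
      - assert (N <= phi (S k)) by lia.
        destruct (Hg (phi (S k))) as [H1 H2]; auto. }
    exists phi; split.
    + apply incr_mono; intro k; apply HN'.
    + intros k l Hkl; induction Hkl; [apply HN'|]. eapply T; eauto. apply HN'.
Qed.

Lemma wqo_transfer (X Y : qo) (g : X -> Y) : (forall x y, qle (g x) (g y) -> qle x y) -> wqo Y -> wqo X.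
Proof.
  intros Hr W f. destruct (W (fun k => g (f k))) as [i [j [Hij Hle]]]. eauto.
Qed.

Lemma wqo_sum (A B : qo) : wqo A -> wqo B -> wqo (sumQO A B).
Proof.
  intros WA WB f.
  destruct (classic (forall N, exists j, N <= j /\ exists a, f j = inl a)) as [Hinf|Hfin].
  - destruct (extract _ Hinf) as [phi [Hm Hp]].
    destruct (Hp 0) as [a0 _].
    set (h := fun k => match f (phi k) with inl a => a | inr _ => a0 end).
    destruct (WA h) as [i [j [Hij Hle]]].
    exists (phi i), (phi j); split; auto.
    unfold h in Hle. destruct (Hp i) as [ai Hi]; destruct (Hp j) as [aj Hj].
    rewrite Hi, Hj in *; simpl; auto.
  - apply not_all_ex_not in Hfin as [N HN].
    assert (Hr : forall j, N <= j -> exists b, f j = inr b).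
    { intros j Hj. destruct (f j) eqn:E; eauto. exfalso; apply HN; eauto. }
    destruct (Hr N (le_n N)) as [b0 _].
    set (h := fun k => match f (N + k) with inr b => b | inl _ => b0 end).
    destruct (WB h) as [i [j [Hij Hle]]].
    exists (N + i), (N + j); split; [lia|].
    unfold h in Hle. destruct (Hr (N + i)) as [bi Hi]; [lia|]. destruct (Hr (N + j)) as [bj Hj]; [lia|].
    rewrite Hi, Hj in *; simpl; auto.
Qed.

Lemma wqo_prod (A B : qo) : transQ A -> wqo A -> wqo B -> wqo (prodQO A B).
Proof.
  intros TA WA WB f.
  destruct (incr_sub A TA WA (fun k => fst (f k))) as [phi [Hm Hp]].
  destruct (WB (fun k => snd (f (phi k)))) as [i [j [Hij Hle]]].
  exists (phi i), (phi j); split; auto. simpl; split; auto.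
Qed.

Definition wqo_on (A : qo) (D : A -> Prop) := forall f : nat -> A, (forall i, D (f i)) -> exists i j, i < j /\ qle (f i) (f j).

Definition LQ (A : qo) : qo := QO (list A) (Forall2 (@qle A)).

Lemma wqo_LQ (A : qo) : transQ A -> wqo A -> forall n, wqo_on (LQ A) (fun l => length l = n).
Proof.
  intros TA WA n; induction n as [|n IH]; intros f Hf.
  - exists 0, 1; split; auto. pose proof (Hf 0); pose proof (Hf 1).
    destruct (f 0), (f 1); simpl in *; try discriminate; constructor.
  - assert (Hd : forall i, exists a l, f i = a :: l /\ length l = n).
    { intro i; specialize (Hf i); destruct (f i); simpl in *; [discriminate|eauto]. }
    destruct (Hd 0) as [a0 _].
    set (hh := fun k => hd a0 (f k)). set (tt := fun k => tl (f k)).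
    destruct (incr_sub A TA WA hh) as [phi [Hm Hp]].
    destruct (IH (fun k => tt (phi k))) as [i [j [Hij Hle]]].
    + intro k; unfold tt; destruct (Hd (phi k)) as [a [l [E El]]]; rewrite E; auto.
    + exists (phi i), (phi j); split; auto.
      specialize (Hp i j Hij). unfold hh, tt in *.
      destruct (Hd (phi i)) as [a [l [E El]]]; destruct (Hd (phi j)) as [b [m [E' Em]]].
      rewrite E, E' in *; simpl in *; constructor; auto.
Qed.

Lemma wqo_pow (A : qo) : transQ A -> wqo A -> forall n, wqo (powQO A n).
Proof.
  intros TA WA n f.
  destruct (wqo_LQ A TA WA n (fun k => proj1_sig (f k))) as [i [j [Hij Hle]]].
  - intro i; exact (proj2_sig (f i)).
  - eauto.
Qed.

Lemma wqo_msetn (A : qo) : transQ A -> wqo A -> forall n, wqo (msetnQO A n).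
Proof.
  intros TA WA n f.
  destruct (wqo_pow A TA WA n f) as [i [j [Hij Hle]]].
  exists i, j; split; auto. simpl. apply Forall2_mset; auto.
Qed.

Lemma bad_app (A : qo) (l : list A) y : bad (l ++ [y]) -> forall x, In x l -> ~ qle x y.
Proof.
  induction l as [|a l IH]; simpl; [tauto|].
  intros [H1 H2] x [<-|Hx]; [apply H1; apply in_or_app; simpl; auto|auto].
Qed.

Lemma bad_snoc (A : qo) (l : list A) y : bad l -> (forall x, In x l -> ~ qle x y) -> bad (l ++ [y]).
Proof.
  induction l as [|a l IH]; simpl; intros Hb Hy.
  - split; auto.
  - destruct Hb as [H1 H2]. split; auto.
    intros z Hz; apply in_app_or in Hz as [Hz|[<-|[]]]; auto.
Qed.

Lemma wqo_acc (A : qo) : wqo A -> Acc (o_child A) [].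
Proof.
  intros W. apply NNPP; intro Hna.
  assert (Hstep : forall t : {t : list A | ~ Acc (o_child A) t},
     exists x : A, ~ Acc (o_child A) (proj1_sig t ++ [x]) /\ bad (proj1_sig t ++ [x])).
  { intros [t Ht]; simpl. apply NNPP; intro Hn. apply Ht. constructor.
    intros t' [[x ->] Hb]. apply NNPP; intro Hx. apply Hn; eauto. }
  set (nx := fun t => proj1_sig (constructive_indefinite_description _ (Hstep t))).
  assert (Hnx : forall t, ~ Acc (o_child A) (proj1_sig t ++ [nx t]) /\ bad (proj1_sig t ++ [nx t]))
    by (intro t; exact (proj2_sig (constructive_indefinite_description _ (Hstep t)))).
  set (h := fix h n : {t : list A | ~ Acc (o_child A) t} := match n with
         | 0 => exist _ [] Hna
         | S n' => exist _ (proj1_sig (h n') ++ [nx (h n')]) (proj1 (Hnx (h n'))) end).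
  set (f := fun n => nx (h n)).
  assert (Hh : forall n, proj1_sig (h n) = map f (seq 0 n)).
  { induction n as [|n IH]; [reflexivity|]. simpl proj1_sig. rewrite IH, seq_S, map_app. reflexivity. }
  destruct (W f) as [i [j [Hij Hle]]].
  destruct (Hnx (h j)) as [_ Hb]. rewrite Hh in Hb.
  apply (bad_app _ _ _ Hb (f i)); auto.
  apply in_map, in_seq; lia.
Qed.

Lemma pigeon (A : Type) (L : list A) (Q : A -> nat -> Prop) :
  (forall j, 1 <= j -> exists a, In a L /\ Q a j) ->
  exists a, In a L /\ forall N, exists j, N <= j /\ Q a j.
Proof.
  revert Q. induction L as [|x L IH]; intros Q H.
  - destruct (H 1) as [a [[] _]]; auto.
  - destruct (classic (forall N, exists j, N <= j /\ Q x j)) as [Hx|Hx]; [exists x; simpl; auto|].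
    apply not_all_ex_not in Hx as [N HN].
    destruct (IH (fun a j => Q a (N + j))) as [a [Ha Hq]].
    + intros j Hj. destruct (H (N + j)) as [a [[<-|Ha] Hq]]; [lia| |eauto].
      exfalso; apply HN; exists (N + j); split; [lia|auto].
    + exists a; split; [simpl; auto|]. intro M. destruct (Hq M) as [j [Hj Hq']].
      exists (N + j); split; [lia|auto].
Qed.

Lemma wqo_pf (A : qo) : wqo A -> wqo (pfQO A).
Proof.
  intros W. pose proof (wqo_acc A W) as Hacc.
  assert (Hgen : forall t, Acc (o_child A) t -> bad t -> forall S : nat -> pfQO A,
     (forall i x, In x (S i) -> forall a, In a t -> ~ qle a x) ->
     exists i j, i < j /\ qle (S i) (S j)).
  { intros t Ht; induction Ht as [t _ IH]; intros Hb S HS.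
    apply NNPP; intro Hbad.
    assert (Hc : forall j, 1 <= j -> exists a, In a (S 0) /\ forall b, In b (S j) -> ~ qle a b).
    { intros j Hj. apply NNPP; intro Hn. apply Hbad. exists 0, j; split; [lia|].
      intros a Ha. apply NNPP; intro Hn2. apply Hn. exists a; split; auto.
      intros b Hb' Hab; apply Hn2; eauto. }
    destruct (pigeon _ _ _ Hc) as [a [Ha Hinf]].
    destruct (extract _ Hinf) as [phi [Hm Hp]].
    destruct (IH (t ++ [a])) with (S := fun k => S (phi k)) as [i [j [Hij Hle]]].
    - split; [eauto|]. apply bad_snoc; auto. intros x Hx; apply (HS 0 a Ha x Hx).
    - apply bad_snoc; auto. intros x Hx; apply (HS 0 a Ha x Hx).
    - intros i x Hx c Hc'. apply in_app_or in Hc' as [Hc'|[<-|[]]].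
      + apply (HS (phi i) x Hx c Hc').
      + apply (Hp i); auto.
    - apply Hbad; exists (phi i), (phi j); split; auto. }
  intro S. apply (Hgen [] Hacc); simpl; auto.
Qed.


Section Ord.
Variable W : word.
Notation le := (@wle W).
Notation lt := (wlt W).

Lemma lt_le x y : lt x y -> le x y. Proof. intros [H _]; auto. Qed.
Lemma nle_lt x y : ~ le x y -> lt y x.
Proof. intros H; split; auto. destruct (wle_total W x y); tauto. Qed.
Lemma lt_nle x y : lt x y -> ~ le y x. Proof. intros [_ H]; auto. Qed.
Lemma lt_le_trans x y z : lt x y -> le y z -> lt x z.
Proof. intros [H1 H2] H3; split; [eapply wle_trans; eauto|]. intro H4; apply H2; eapply wle_trans; eauto. Qed.
Lemma le_lt_trans x y z : le x y -> lt y z -> lt x z.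
Proof. intros H1 [H2 H3]; split; [eapply wle_trans; eauto|]. intro H4; apply H3; eapply wle_trans; eauto. Qed.
Lemma nlt_le x y : ~ lt x y -> le y x.
Proof. intros H. apply NNPP; intro H'. apply H. split; auto. destruct (wle_total W x y); tauto. Qed.
Lemma lt_irr x : ~ lt x x. Proof. intros [_ H]; apply H, wle_refl. Qed.
Lemma lt_trans x y z : lt x y -> lt y z -> lt x z.
Proof. intros H1 H2; eapply lt_le_trans; eauto; apply lt_le; auto. Qed.

Lemma wf_min (P : W -> Prop) : (exists x, P x) -> exists m, P m /\ forall y, P y -> le m y.
Proof.
  intros [x Hx]. revert Hx. pattern x. apply (well_founded_ind (wlt_wf W)). clear x.
  intros x IH Hx.
  destruct (classic (exists y, P y /\ lt y x)) as [[y [Hy Hyx]]|Hn].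
  - apply (IH y); auto.
  - exists x; split; auto. intros y Hy. apply NNPP; intro H. apply Hn; exists y; split; auto.
    apply nle_lt; auto.
Qed.

Lemma wqo_word : wqo (wordQO W).
Proof.
  intro f. destruct (wf_min (fun x => exists i, f i = x)) as [m [[i <-] Hm]]; [exists (f 0), 0; reflexivity|].
  exists i, (S i); split; auto. apply Hm; exists (S i); reflexivity.
Qed.

Lemma wqo_seg w : wqo (segQO W w).
Proof.
  apply (wqo_transfer (segQO W w) (wordQO W) (fun x : seg W w => proj1_sig x)); auto. apply wqo_word.
Qed.

Lemma strict_ge (x : W) (h : seg W x -> W) :
  (forall a b : seg W x, lt (proj1_sig a) (proj1_sig b) -> lt (h a) (h b)) ->
  forall a : seg W x, le (proj1_sig a) (h a).
Proof.
  intros Hh a. destruct a as [a Ha]. revert Ha. pattern a. apply (well_founded_ind (wlt_wf W)). clear a.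
  intros a IH Ha. simpl. apply NNPP; intro Hn. apply nle_lt in Hn.
  assert (Hb : lt (h (exist _ a Ha)) x) by (eapply lt_trans; eauto).
  specialize (IH _ Hn Hb). simpl in IH.
  specialize (Hh (exist (fun y => lt y x) _ Hb) (exist (fun y => lt y x) a Ha) Hn). simpl in Hh.
  apply (lt_irr (h (exist _ a Ha))). eapply le_lt_trans; eauto.
Qed.

Lemma no_max : mult_indec W -> ge_omega_omega W -> forall x : W, exists y, lt x y.
Proof.
  intros MI [g Hg] x.
  assert (n0 : noninc []) by exact I.
  assert (n1 : noninc [0]) by (split; [intros y []|exact I]).
  assert (n2 : noninc [1]) by (split; [intros y []|exact I]).
  set (o0 := exist noninc [] n0 : omega_omega).
  set (o1 := exist noninc [0] n1 : omega_omega).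
  set (o2 := exist noninc [1] n2 : omega_omega).
  assert (H01 : lt (g o0) (g o1)) by (apply Hg; simpl; auto).
  assert (H12 : lt (g o1) (g o2)) by (apply Hg; simpl; auto).
  destruct (classic (exists z, lt z x)) as [[z Hz]|Hn].
  - destruct (MI x (g o2)) as [w [f Hf]].
    exists w. apply NNPP; intro Hxw. apply nlt_le in Hxw.
    assert (Ha0 : lt (g o0) (g o2)) by (eapply lt_trans; eauto).
    set (A0 := exist (fun y => lt y (g o2)) (g o0) Ha0).
    set (A1 := exist (fun y => lt y (g o2)) (g o1) H12).
    set (Z0 := exist (fun y => lt y x) z Hz).
    set (h := fun a : seg W x => proj1_sig (f (A0, a))).
    assert (Hh : forall a b : seg W x, lt (proj1_sig a) (proj1_sig b) -> lt (h a) (h b)).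
    { intros a b Hab. apply (Hf (A0, a) (A0, b)). right; simpl; auto. }
    set (v := proj1_sig (f (A1, Z0))).
    assert (Hv : lt v x) by (eapply lt_le_trans; [exact (proj2_sig (f (A1, Z0)))|auto]).
    set (V := exist (fun y => lt y x) v Hv).
    pose proof (strict_ge x h Hh V) as H1. simpl in H1.
    assert (H2 : lt (h V) v) by (apply (Hf (A0, V) (A1, Z0)); left; simpl; auto).
    apply (lt_irr v). eapply le_lt_trans; eauto.
  - exists (g o1). eapply le_lt_trans; [|exact H01].
    destruct (wle_total W x (g o0)) as [H|H]; auto.
    apply NNPP; intro H'. apply Hn. exists (g o0); split; auto.
Qed.

End Ord.

Section Succ.
Variable W : word.
Notation le := (@wle W).
Notation lt := (wlt W).
Variable NM : forall x : W, exists y, lt x y.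

Lemma succ_ex (x : W) : exists s, lt x s /\ forall y, lt x y -> le s y.
Proof. apply wf_min; auto. Qed.

Definition succ (x : W) : W := proj1_sig (constructive_indefinite_description _ (succ_ex x)).
Lemma succ_gt x : lt x (succ x).
Proof. exact (proj1 (proj2_sig (constructive_indefinite_description _ (succ_ex x)))). Qed.
Lemma succ_min x y : lt x y -> le (succ x) y.
Proof. exact (proj2 (proj2_sig (constructive_indefinite_description _ (succ_ex x))) y). Qed.
Lemma succ_mono x y : le x y -> le (succ x) (succ y).
Proof. intros H; apply succ_min. eapply le_lt_trans; eauto. apply succ_gt. Qed.
Lemma succ_refl x y : le (succ x) (succ y) -> le x y.
Proof.
  intros H. apply NNPP; intro Hn. apply nle_lt in Hn.
  apply succ_min in Hn. apply (lt_irr W (succ x)).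
  eapply le_lt_trans; [exact (wle_trans W _ _ _ H Hn)|apply succ_gt].
Qed.

Definition sk (k : nat) (x : W) : W := Nat.iter k succ x.
Lemma sk_mono k x y : le x y -> le (sk k x) (sk k y).
Proof. induction k; simpl; auto. intros H; apply succ_mono; auto. Qed.
Lemma sk_refl k x y : le (sk k x) (sk k y) -> le x y.
Proof. induction k; simpl; auto. intros H; apply IHk, succ_refl; auto. Qed.
Lemma sk_ge k x : le x (sk k x).
Proof. induction k; simpl; [apply wle_refl|]. eapply wle_trans; eauto. apply lt_le, succ_gt. Qed.
Lemma sk_lt i k x : i < k -> lt (sk i x) (sk k x).
Proof.
  intros H; induction H; simpl.
  - apply succ_gt.
  - eapply lt_trans; eauto. apply succ_gt.
Qed.

End Succ.


Definition good (X : qo) := wqo X /\ transQ X /\ reflQ X.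

Lemma good_iso X Y : wpo_iso X Y -> good Y -> good X.
Proof.
  intros [f [Hf _]] [W [T R]]; split; [|split].
  - apply (wqo_transfer X Y f); auto. intros x y; apply Hf.
  - intros x y z H1 H2; apply Hf; eapply T; apply Hf; eauto.
  - intro x; apply Hf, R.
Qed.

Lemma approx_good (e : expr) : forall X, approx e X -> good X.
Proof.
  induction e as [W m g|e1 IH1 e2 IH2|e1 IH1 e2 IH2|e1 IH1|e1 IH1|e1 IH1]; simpl; intros X HX.
  - destruct HX as [w Hw]. apply (good_iso _ _ Hw). split; [|split].
    + apply wqo_seg.
    + intros x y z; apply wle_trans.
    + intro x; apply wle_refl.
  - destruct HX as [A [B [HA [HB Hi]]]]. apply (good_iso _ _ Hi).
    destruct (IH1 A HA) as [WA [TA RA]]; destruct (IH2 B HB) as [WB [TB RB]].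
    split; [|split].
    + apply wqo_sum; auto.
    + intros [a|b] [c|d] [u|v]; simpl; try tauto; eauto.
    + intros [a|b]; simpl; auto.
  - destruct HX as [A [B [HA [HB Hi]]]]. apply (good_iso _ _ Hi).
    destruct (IH1 A HA) as [WA [TA RA]]; destruct (IH2 B HB) as [WB [TB RB]].
    split; [|split].
    + apply wqo_prod; auto.
    + intros [a b] [c d] [u v]; simpl; intros [? ?] [? ?]; eauto.
    + intros [a b]; simpl; auto.
  - destruct HX as [A [n [HA Hi]]]. apply (good_iso _ _ Hi).
    destruct (IH1 A HA) as [WA [TA RA]]. split; [|split].
    + apply wqo_pow; auto.
    + intros x y z; simpl; apply Forall2_trans'; auto.
    + intro x; simpl; apply Forall2_refl'; auto.
  - destruct HX as [A [n [HA Hi]]]. apply (good_iso _ _ Hi).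
    destruct (IH1 A HA) as [WA [TA RA]]. split; [|split].
    + apply wqo_msetn; auto.
    + intros x y z; simpl; apply mset_trans; auto.
    + intro x; simpl; apply mset_refl; auto.
  - destruct HX as [A [HA Hi]]. apply (good_iso _ _ Hi).
    destruct (IH1 A HA) as [WA [TA RA]]. split; [|split].
    + apply wqo_pf; auto.
    + apply hoare_trans; auto.
    + apply hoare_refl; auto.
Qed.


Definition Sys (X : qo) (D : X -> Prop) (T : qo) (psi : X -> T) (G : list X -> list T) : Prop :=
  (forall F y, (forall f, In f F -> D f) -> D y -> (forall f, In f F -> ~ qle f y) ->
      exists g, In g (G F) /\ qle (psi y) g) /\
  (forall F f g, (forall f, In f F -> D f) -> In f F -> In g (G F) -> ~ qle (psi f) g) /\
  (forall F F', (forall f, In f F' -> D f) -> incl F F' -> forall g', In g' (G F') ->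
      exists g, In g (G F) /\ qle g' g).

Lemma sys_transport (X Y T : qo) DX DY psi G (f : X -> Y) :
  Sys Y DY T psi G -> (forall x y, qle (f x) (f y) -> qle x y) -> (forall x, DX x -> DY (f x)) ->
  Sys X DX T (fun x => psi (f x)) (fun F => G (map f F)).
Proof.
  intros [HA [HB HC]] Hr HD; split; [|split].
  - intros F y HF Hy Hn. apply HA; auto.
    + intros z Hz; apply in_map_iff in Hz as [x [<- Hx]]; auto.
    + intros z Hz Hle; apply in_map_iff in Hz as [x [<- Hx]]; apply (Hn x); auto.
  - intros F x g HF Hx Hg. apply (HB (map f F)); auto.
    + intros z Hz; apply in_map_iff in Hz as [x' [<- Hx']]; auto.
    + apply in_map; auto.
  - intros F F' HF Hi g' Hg'. apply (HC (map f F) (map f F')); auto.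
    + intros z Hz; apply in_map_iff in Hz as [x' [<- Hx']]; auto.
    + intros z Hz; apply in_map_iff in Hz as [x' [<- Hx']]; apply in_map; auto.
Qed.

Definition lefts {A B : Type} (F : list (A + B)) : list A :=
  flat_map (fun x => match x with inl a => [a] | inr _ => [] end) F.
Definition rights {A B : Type} (F : list (A + B)) : list B :=
  flat_map (fun x => match x with inr b => [b] | inl _ => [] end) F.

Lemma in_lefts {A B : Type} (F : list (A + B)) a : In a (lefts F) <-> In (inl a) F.
Proof.
  unfold lefts; rewrite in_flat_map; split.
  - intros [[x|x] [Hx Ha]]; simpl in Ha; [destruct Ha as [<-|[]]; auto|contradiction].
  - intros H; exists (inl a); simpl; auto.
Qed.
Lemma in_rights {A B : Type} (F : list (A + B)) a : In a (rights F) <-> In (inr a) F.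
Proof.
  unfold rights; rewrite in_flat_map; split.
  - intros [[x|x] [Hx Ha]]; simpl in Ha; [contradiction|destruct Ha as [<-|[]]; auto].
  - intros H; exists (inr a); simpl; auto.
Qed.

Lemma sys_sum (A B T1 T2 : qo) p1 G1 p2 G2 :
  Sys A (fun _ => True) T1 p1 G1 -> Sys B (fun _ => True) T2 p2 G2 ->
  Sys (sumQO A B) (fun _ => True) (sumQO T1 T2)
    (fun x => match x with inl a => inl (p1 a) | inr b => inr (p2 b) end)
    (fun F => map inl (G1 (lefts F)) ++ map inr (G2 (rights F))).
Proof.
  intros [A1 [B1 C1]] [A2 [B2 C2]]; split; [|split].
  - intros F [a|b] _ _ Hn.
    + destruct (A1 (lefts F) a) as [g [Hg Hle]]; auto.
      { intros f Hf; apply in_lefts in Hf. exact (Hn _ Hf). }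
      exists (inl g); split; auto. apply in_or_app; left; apply in_map; auto.
    + destruct (A2 (rights F) b) as [g [Hg Hle]]; auto.
      { intros f Hf; apply in_rights in Hf. exact (Hn _ Hf). }
      exists (inr g); split; auto. apply in_or_app; right; apply in_map; auto.
  - intros F [a|b] g _ Hf Hg; apply in_app_or in Hg as [Hg|Hg]; apply in_map_iff in Hg as [g' [<- Hg']]; simpl; auto.
    + apply (B1 (lefts F)); auto. apply in_lefts; auto.
    + apply (B2 (rights F)); auto. apply in_rights; auto.
  - intros F F' _ Hi g' Hg'. apply in_app_or in Hg' as [Hg|Hg]; apply in_map_iff in Hg as [g [<- Hg]].
    + destruct (C1 (lefts F) (lefts F')) with (g' := g) as [h [Hh Hle]]; auto.
      { intros z Hz; apply in_lefts in Hz; apply in_lefts; auto. }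
      exists (inl h); split; auto. apply in_or_app; left; apply in_map; auto.
    + destruct (C2 (rights F) (rights F')) with (g' := g) as [h [Hh Hle]]; auto.
      { intros z Hz; apply in_rights in Hz; apply in_rights; auto. }
      exists (inr h); split; auto. apply in_or_app; right; apply in_map; auto.
Qed.

Fixpoint partsP {A B : Type} (F : list (A * B)) : list (list A * list B) :=
  match F with
  | [] => [([], [])]
  | (a, b) :: F' => map (fun p => (a :: fst p, snd p)) (partsP F') ++ map (fun p => (fst p, b :: snd p)) (partsP F')
  end.

Lemma partsP_choose {A B : Type} (F : list (A * B)) (Q1 : A -> Prop) (Q2 : B -> Prop) :
  (forall a b, In (a, b) F -> Q1 a \/ Q2 b) ->
  exists p, In p (partsP F) /\ (forall a, In a (fst p) -> Q1 a) /\ (forall b, In b (snd p) -> Q2 b).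
Proof.
  induction F as [|[a b] F IH]; simpl; intros H.
  - exists ([], []); simpl; tauto.
  - destruct IH as [p [Hp [H1 H2]]]; [intros; apply H; auto|].
    destruct (H a b (or_introl eq_refl)) as [Ha|Hb].
    + exists (a :: fst p, snd p); split; [apply in_or_app; left; apply in_map_iff; eauto|].
      simpl; split; auto. intros x [<-|Hx]; auto.
    + exists (fst p, b :: snd p); split; [apply in_or_app; right; apply in_map_iff; eauto|].
      simpl; split; auto. intros x [<-|Hx]; auto.
Qed.

Lemma partsP_cover {A B : Type} (F : list (A * B)) p a b :
  In p (partsP F) -> In (a, b) F -> In a (fst p) \/ In b (snd p).
Proof.
  revert p; induction F as [|[a' b'] F IH]; simpl; intros p Hp Hab; [contradiction|].
  apply in_app_or in Hp as [Hp|Hp]; apply in_map_iff in Hp as [q [<- Hq]]; simpl.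
  - destruct Hab as [E|Hab]; [injection E as -> ->; auto|]. destruct (IH q Hq Hab); auto.
  - destruct Hab as [E|Hab]; [injection E as -> ->; auto|]. destruct (IH q Hq Hab); auto.
Qed.

Lemma sys_prod (A B T1 T2 : qo) p1 G1 p2 G2 :
  Sys A (fun _ => True) T1 p1 G1 -> Sys B (fun _ => True) T2 p2 G2 ->
  Sys (prodQO A B) (fun _ => True) (prodQO T1 T2)
    (fun x => (p1 (fst x), p2 (snd x)))
    (fun F => flat_map (fun p => list_prod (G1 (fst p)) (G2 (snd p))) (partsP F)).
Proof.
  intros [A1 [B1 C1]] [A2 [B2 C2]]; split; [|split].
  - intros F [a b] _ _ Hn.
    destruct (partsP_choose F (fun x => ~ qle x a) (fun y => ~ qle y b)) as [p [Hp [H1 H2]]].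
    { intros x y Hxy. destruct (classic (qle x a)); [right|left; auto].
      intro Hy; apply (Hn _ Hxy); simpl; auto. }
    destruct (A1 (fst p) a) as [g1 [Hg1 Hl1]]; auto.
    destruct (A2 (snd p) b) as [g2 [Hg2 Hl2]]; auto.
    exists (g1, g2); split; [|simpl; auto].
    apply in_flat_map; exists p; split; auto. apply in_prod; auto.
  - intros F [a b] [g1 g2] _ Hf Hg [Hl1 Hl2]; simpl in *.
    apply in_flat_map in Hg as [p [Hp Hg]]. apply in_prod_iff in Hg as [Hg1 Hg2].
    destruct (partsP_cover F p a b Hp Hf) as [Ha|Hb].
    + apply (B1 (fst p) a g1); auto.
    + apply (B2 (snd p) b g2); auto.
  - intros F F' _ Hi [g1 g2] Hg. apply in_flat_map in Hg as [p' [Hp' Hg]]. apply in_prod_iff in Hg as [Hg1 Hg2].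
    destruct (partsP_choose F (fun x => In x (fst p')) (fun y => In y (snd p'))) as [p [Hp [H1 H2]]].
    { intros x y Hxy. apply (partsP_cover F' p' x y Hp'); auto. }
    destruct (C1 (fst p) (fst p')) with (g' := g1) as [h1 [Hh1 Hl1]]; auto.
    destruct (C2 (snd p) (snd p')) with (g' := g2) as [h2 [Hh2 Hl2]]; auto.
    exists (h1, h2); split; [|simpl; auto].
    apply in_flat_map; exists p; split; auto. apply in_prod; auto.
Qed.

Fixpoint partsL {A : Type} (F : list (list A)) : list (list A * list (list A)) :=
  match F with
  | [] => [([], [])]
  | [] :: F' => partsL F'
  | (a :: l) :: F' => map (fun p => (a :: fst p, snd p)) (partsL F') ++ map (fun p => (fst p, l :: snd p)) (partsL F')
  end.

Lemma partsL_choose {A : Type} (F : list (list A)) (Q1 : A -> Prop) (Q2 : list A -> Prop) :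
  (forall a l, In (a :: l) F -> Q1 a \/ Q2 l) ->
  exists p, In p (partsL F) /\ (forall a, In a (fst p) -> Q1 a) /\ (forall b, In b (snd p) -> Q2 b).
Proof.
  induction F as [|[|a l] F IH]; simpl; intros H.
  - exists ([], []); simpl; tauto.
  - apply IH; intros; apply H; auto.
  - destruct IH as [p [Hp [H1 H2]]]; [intros; apply H; auto|].
    destruct (H a l (or_introl eq_refl)) as [Ha|Hb].
    + exists (a :: fst p, snd p); split; [apply in_or_app; left; apply in_map_iff; eauto|].
      simpl; split; auto. intros x [<-|Hx]; auto.
    + exists (fst p, l :: snd p); split; [apply in_or_app; right; apply in_map_iff; eauto|].
      simpl; split; auto. intros x [<-|Hx]; auto.
Qed.

Lemma partsL_cover {A : Type} (F : list (list A)) p a l :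
  In p (partsL F) -> In (a :: l) F -> In a (fst p) \/ In l (snd p).
Proof.
  revert p; induction F as [|[|a' l'] F IH]; simpl; intros p Hp Hab; [contradiction| |].
  - destruct Hab as [E|Hab]; [discriminate|auto].
  - apply in_app_or in Hp as [Hp|Hp]; apply in_map_iff in Hp as [q [<- Hq]]; simpl.
    + destruct Hab as [E|Hab]; [injection E as -> ->; auto|]. destruct (IH q Hq Hab); auto.
    + destruct Hab as [E|Hab]; [injection E as -> ->; auto|]. destruct (IH q Hq Hab); auto.
Qed.

Lemma partsL_sub {A : Type} (F : list (list A)) p l :
  In p (partsL F) -> In l (snd p) -> exists a, In (a :: l) F.
Proof.
  revert p; induction F as [|[|a' l'] F IH]; simpl; intros p Hp Hl.
  - destruct Hp as [<-|[]]; simpl in Hl; contradiction.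
  - destruct (IH p Hp Hl) as [a Ha]; eauto.
  - apply in_app_or in Hp as [Hp|Hp]; apply in_map_iff in Hp as [q [<- Hq]]; simpl in Hl.
    + destruct (IH q Hq Hl) as [a Ha]; eauto.
    + destruct Hl as [<-|Hl]; [eauto|]. destruct (IH q Hq Hl) as [a Ha]; eauto.
Qed.

Definition G0 {A T : Type} (F : list (list A)) : list (list T) :=
  match F with [] => [[]] | _ => [] end.

Lemma sys_pow (A T : qo) psi G : Sys A (fun _ => True) T psi G ->
  forall n, exists Gn, Sys (LQ A) (fun l => length l = n) (LQ T) (map psi) Gn /\
     forall F g, In g (Gn F) -> length g = n.
Proof.
  intros [A1 [B1 C1]] n; induction n as [|n [Gn [[An [Bn Cn]] Ln]]].
  - exists G0; split; [split; [|split]|].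
    + intros F y HF Hy Hn. destruct F as [|f F].
      * exists []; simpl; split; auto. destruct y; [constructor|discriminate].
      * exfalso. apply (Hn f); [simpl; auto|]. specialize (HF f (or_introl eq_refl)).
        destruct f, y; try discriminate; constructor.
    + intros F f g HF Hf Hg. destruct F; [contradiction|simpl in Hg; contradiction].
    + intros F F' HF Hi g' Hg'. destruct F' as [|f' F'].
      * destruct F as [|f F]; [|exfalso; apply (Hi f); simpl; auto].
        simpl in Hg'; destruct Hg' as [<-|[]]. exists []; simpl; split; auto; constructor.
      * simpl in Hg'; contradiction.
    + intros F g Hg. destruct F; simpl in Hg; [destruct Hg as [<-|[]]; auto|contradiction].
  - exists (fun F : list (list A) => flat_map (fun p : list A * list (list A) => flat_map (fun g1 => map (cons g1) (Gn (snd p))) (G (fst p))) (partsL F)).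
    assert (Hlen : forall (F : list (list A)) (p : list A * list (list A)) (l : list A), (forall f : list A, In f F -> length f = S n) -> In p (partsL F) -> In l (snd p) -> length l = n).
    { intros F p l HF Hp Hl. destruct (partsL_sub F p l Hp Hl) as [a Ha]. specialize (HF _ Ha); simpl in HF; lia. }
    split; [split; [|split]|].
    + intros F y HF Hy Hn. destruct y as [|b yl]; [discriminate|]. simpl in Hy.
      destruct (partsL_choose F (fun x => ~ qle x b) (fun l => ~ Forall2 (@qle A) l yl)) as [p [Hp [H1 H2]]].
      { intros a l Hal. destruct (classic (qle a b)); [right|left; auto].
        intro Hy'; apply (Hn _ Hal); simpl; constructor; auto. }
      destruct (A1 (fst p) b) as [g1 [Hg1 Hl1]]; auto.
      destruct (An (snd p) yl) as [gl [Hgl Hll]]; auto.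
      { intros f Hf; eapply Hlen; eauto. }
      exists (g1 :: gl); split; [|simpl; constructor; auto].
      apply in_flat_map; exists p; split; auto. apply in_flat_map; exists g1; split; auto. apply in_map; auto.
    + intros F f g HF Hf Hg Hle.
      apply in_flat_map in Hg as [p [Hp Hg]]. apply in_flat_map in Hg as [g1 [Hg1 Hg]].
      apply in_map_iff in Hg as [gl [<- Hgl]].
      destruct f as [|a l]; [specialize (HF _ Hf); discriminate|].
      simpl in Hle; inversion Hle; subst.
      destruct (partsL_cover F p a l Hp Hf) as [Ha|Hl].
      * apply (B1 (fst p) a g1); auto.
      * apply (Bn (snd p) l gl); auto. intros f' Hf'; eapply Hlen; eauto.
    + intros F F' HF Hi g' Hg'.
      apply in_flat_map in Hg' as [p' [Hp' Hg]]. apply in_flat_map in Hg as [g1 [Hg1 Hg]].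
      apply in_map_iff in Hg as [gl [<- Hgl]].
      destruct (partsL_choose F (fun x => In x (fst p')) (fun y => In y (snd p'))) as [p [Hp [H1 H2]]].
      { intros a l Hal. apply (partsL_cover F' p' a l Hp'); auto. }
      destruct (C1 (fst p) (fst p')) with (g' := g1) as [h1 [Hh1 Hl1]]; auto.
      destruct (Cn (snd p) (snd p')) with (g' := gl) as [h2 [Hh2 Hl2]]; auto.
      { intros f Hf; eapply Hlen; eauto. }
      exists (h1 :: h2); split; [|simpl; constructor; auto].
      apply in_flat_map; exists p; split; auto. apply in_flat_map; exists h1; split; auto. apply in_map; auto.
    + intros F g Hg. apply in_flat_map in Hg as [p [Hp Hg]]. apply in_flat_map in Hg as [g1 [Hg1 Hg]].
      apply in_map_iff in Hg as [gl [<- Hgl]]. simpl; f_equal; eauto.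
Qed.

Lemma sys_star (A T : qo) psi G : Sys A (fun _ => True) T psi G -> forall n,
  exists G', Sys (powQO A n) (fun _ => True) (starQO T) (fun x => map psi (proj1_sig x)) G'.
Proof.
  intros HS n. destruct (sys_pow A T psi G HS n) as [Gn [[An [Bn Cn]] Ln]].
  exists (fun F => Gn (map (fun x => proj1_sig x) F)); split; [|split].
  - intros F y _ _ Hn. destruct (An (map (fun x => proj1_sig x) F) (proj1_sig y)) as [g [Hg Hle]].
    + intros f Hf; apply in_map_iff in Hf as [x [<- _]]; exact (proj2_sig x).
    + exact (proj2_sig y).
    + intros f Hf; apply in_map_iff in Hf as [x [<- Hx]]; exact (Hn x Hx).
    + exists g; split; auto. apply Forall2_subword; auto.
  - intros F f g _ Hf Hg Hle. apply (Bn (map (fun x => proj1_sig x) F) (proj1_sig f) g); auto.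
    + intros z Hz; apply in_map_iff in Hz as [x [<- _]]; exact (proj2_sig x).
    + apply in_map; auto.
    + apply subword_Forall2; auto. rewrite length_map, (proj2_sig f). symmetry; eauto.
  - intros F F' _ Hi g' Hg'. destruct (Cn (map (fun x => proj1_sig x) F) (map (fun x => proj1_sig x) F')) with (g' := g') as [g [Hg Hle]]; auto.
    + intros z Hz; apply in_map_iff in Hz as [x [<- _]]; exact (proj2_sig x).
    + intros z Hz; apply in_map_iff in Hz as [x [<- Hx]]; apply in_map; auto.
    + exists g; split; auto. apply Forall2_subword; auto.
Qed.

Fixpoint ins_all {A : Type} (x : A) (l : list A) : list (list A) :=
  match l with
  | [] => [[x]]
  | y :: l' => (x :: y :: l') :: map (cons y) (ins_all x l')
  end.

Fixpoint perms {A : Type} (l : list A) : list (list A) :=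
  match l with
  | [] => [[]]
  | x :: l' => flat_map (ins_all x) (perms l')
  end.

Lemma ins_all_spec {A : Type} (x : A) l m : In m (ins_all x l) -> exists l1 l2, l = l1 ++ l2 /\ m = l1 ++ x :: l2.
Proof.
  revert m; induction l as [|y l IH]; simpl; intros m Hm.
  - destruct Hm as [<-|[]]; exists [], []; auto.
  - destruct Hm as [<-|Hm]; [exists [], (y :: l); auto|].
    apply in_map_iff in Hm as [m' [<- Hm']]. destruct (IH m' Hm') as [l1 [l2 [-> ->]]].
    exists (y :: l1), l2; auto.
Qed.

Lemma ins_all_in {A : Type} (x : A) l1 l2 : In (l1 ++ x :: l2) (ins_all x (l1 ++ l2)).
Proof.
  induction l1 as [|y l1 IH]; simpl.
  - destruct l2; simpl; auto.
  - right; apply in_map; auto.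
Qed.

Lemma perms_sound {A : Type} (l m : list A) : In m (perms l) -> Permutation l m.
Proof.
  revert m; induction l as [|x l IH]; simpl; intros m Hm.
  - destruct Hm as [<-|[]]; auto.
  - apply in_flat_map in Hm as [m' [Hm' Hi]]. apply ins_all_spec in Hi as [l1 [l2 [-> ->]]].
    apply Permutation_cons_app. auto.
Qed.

Lemma perms_complete {A : Type} (l m : list A) : Permutation l m -> In m (perms l).
Proof.
  revert m; induction l as [|x l IH]; simpl; intros m Hm.
  - apply Permutation_nil in Hm; subst; auto.
  - assert (Hin : In x m) by (apply (Permutation_in _ Hm); simpl; auto).
    destruct (in_split _ _ Hin) as [l1 [l2 ->]].
    apply in_flat_map. exists (l1 ++ l2); split.
    + apply IH. apply Permutation_cons_app_inv with (a := x). auto.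
    + apply ins_all_in.
Qed.

Definition expand {A : Type} (F : list (list A)) := flat_map perms F.

Lemma sys_mset (A T : qo) psi G : Sys A (fun _ => True) T psi G -> forall n,
  exists G', Sys (msetnQO A n) (fun _ => True) (msetQO T) (fun x => map psi (proj1_sig x)) G'.
Proof.
  intros HS n. destruct (sys_pow A T psi G HS n) as [Gn [[An [Bn Cn]] Ln]].
  set (pr := fun x : msetnQO A n => proj1_sig x).
  assert (HD : forall F f, In f (expand (map pr F)) -> length f = n).
  { intros F f Hf. apply in_flat_map in Hf as [f0 [Hf0 Hp]]. apply in_map_iff in Hf0 as [x [<- _]].
    apply perms_sound, Permutation_length in Hp. rewrite <- Hp. exact (proj2_sig x). }
  exists (fun F => Gn (expand (map pr F))); split; [|split].
  - intros F y _ _ Hn. destruct (An (expand (map pr F)) (proj1_sig y)) as [g [Hg Hle]].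
    + intros f Hf; eapply HD; eauto.
    + exact (proj2_sig y).
    + intros f Hf Hle. apply in_flat_map in Hf as [f0 [Hf0 Hp]]. apply in_map_iff in Hf0 as [x [<- Hx]].
      apply (Hn x Hx). simpl. apply mset_perm_l with f; [apply Forall2_mset; auto|].
      apply Permutation_sym, perms_sound; auto.
    + exists g; split; auto. apply Forall2_mset; auto.
  - intros F f g _ Hf Hg Hle. simpl in Hle.
    destruct (mset_eqlen T _ _ Hle) as [u' [Hp HF2]].
    { rewrite length_map. transitivity n; [exact (proj2_sig f)|symmetry; eauto]. }
    apply Permutation_sym in Hp. apply Permutation_map_inv in Hp as [f' [-> Hp]].
    apply (Bn (expand (map pr F)) f' g); auto.
    + intros z Hz; eapply HD; eauto.
    + apply in_flat_map. exists (proj1_sig f); split; [apply (in_map pr); auto|]. apply perms_complete; auto.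
  - intros F F' _ Hi g' Hg'. destruct (Cn (expand (map pr F)) (expand (map pr F'))) with (g' := g') as [g [Hg Hle]]; auto.
    + intros z Hz; eapply HD; eauto.
    + intros z Hz. apply in_flat_map in Hz as [f0 [Hf0 Hp]]. apply in_map_iff in Hf0 as [x [<- Hx]].
      apply in_flat_map; exists (pr x); split; auto. apply in_map; auto.
    + exists g; split; auto. apply Forall2_mset; auto.
Qed.

Fixpoint choices {A : Type} (F : list (list A)) : list (list A) :=
  match F with
  | [] => [[]]
  | f :: F' => flat_map (fun a => map (cons a) (choices F')) f
  end.

Lemma choices_choose {A : Type} (F : list (list A)) (Q : A -> Prop) :
  (forall f, In f F -> exists a, In a f /\ Q a) -> exists c, In c (choices F) /\ forall a, In a c -> Q a.
Proof.
  induction F as [|f F IH]; simpl; intros H.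
  - exists []; simpl; tauto.
  - destruct IH as [c [Hc Hq]]; [intros; apply H; auto|].
    destruct (H f (or_introl eq_refl)) as [a [Ha Hqa]].
    exists (a :: c); split; [apply in_flat_map; exists a; split; auto; apply in_map; auto|].
    intros x [<-|Hx]; auto.
Qed.

Lemma choices_hit {A : Type} (F : list (list A)) c f : In c (choices F) -> In f F -> exists a, In a f /\ In a c.
Proof.
  revert c; induction F as [|f' F IH]; simpl; intros c Hc Hf; [contradiction|].
  apply in_flat_map in Hc as [a [Ha Hc]]. apply in_map_iff in Hc as [c' [<- Hc']].
  destruct Hf as [<-|Hf]; [exists a; simpl; auto|].
  destruct (IH c' Hc' Hf) as [b [Hb Hb']]; exists b; simpl; auto.
Qed.

Lemma sys_pf (A T : qo) psi G : Sys A (fun _ => True) T psi G ->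
  Sys (pfQO A) (fun _ => True) (pfQO T) (map psi) (fun F => map G (choices F)).
Proof.
  intros [A1 [B1 C1]]; split; [|split].
  - intros F y _ _ Hn.
    destruct (choices_choose F (fun a => forall b, In b y -> ~ qle a b)) as [c [Hc Hq]].
    { intros f Hf. apply NNPP; intro H. apply (Hn f Hf). intros a Ha. apply NNPP; intro H2.
      apply H; exists a; split; auto. intros b Hb Hab; apply H2; eauto. }
    exists (G c); split; [apply in_map; auto|].
    intros pb Hpb. apply in_map_iff in Hpb as [b [<- Hb]].
    apply (A1 c b); auto.
  - intros F f g _ Hf Hg Hle. apply in_map_iff in Hg as [c [<- Hc]].
    destruct (choices_hit F c f Hc Hf) as [a [Ha Hac]].
    destruct (Hle (psi a) (in_map _ _ _ Ha)) as [g' [Hg' Hl]].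
    apply (B1 c a g'); auto.
  - intros F F' _ Hi g' Hg'. apply in_map_iff in Hg' as [c' [<- Hc']].
    destruct (choices_choose F (fun a => In a c')) as [c [Hc Hq]].
    { intros f Hf. apply (choices_hit F' c' f Hc'); auto. }
    exists (G c); split; [apply in_map; auto|].
    intros x Hx. destruct (C1 c c') with (g' := x) as [h [Hh Hl]]; eauto.
Qed.

Section OrdSys.
Variable W : word.
Variable NM : forall x : W, exists y, wlt W x y.
Variable w : W.

Fixpoint minl (F : list (seg W w)) : W :=
  match F with
  | [] => w
  | x :: F' => if excluded_middle_informative (wle W (proj1_sig x) (minl F')) then proj1_sig x else minl F'
  end.

Lemma minl_le F : forall x, In x F -> wle W (minl F) (proj1_sig x).
Proof.
  induction F as [|y F IH]; simpl; intros x Hx; [contradiction|].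
  destruct (excluded_middle_informative _) as [H|H]; destruct Hx as [<-|Hx].
  - apply wle_refl.
  - eapply wle_trans; eauto.
  - apply nle_lt in H. apply lt_le; auto.
  - auto.
Qed.

Lemma minl_le_w F : wle W (minl F) w.
Proof.
  induction F as [|y F IH]; simpl; [apply wle_refl|].
  destruct (excluded_middle_informative _) as [H|H]; auto. eapply wle_trans; eauto.
Qed.

Lemma minl_in F : minl F = w \/ exists x, In x F /\ minl F = proj1_sig x.
Proof.
  induction F as [|y F IH]; simpl; auto.
  destruct (excluded_middle_informative _) as [H|H]; [right; eauto|].
  destruct IH as [E|[x [Hx E]]]; auto. right; eauto.
Qed.

Lemma sys_ord : Sys (segQO W w) (fun _ => True) (wordQO W) (fun x => succ W NM (proj1_sig x)) (fun F => [minl F]).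
Proof.
  split; [|split].
  - intros F y _ _ Hn. exists (minl F); split; [simpl; auto|]. simpl.
    apply succ_min. destruct (minl_in F) as [E|[x [Hx E]]]; rewrite E.
    + exact (proj2_sig y).
    + apply nle_lt. exact (Hn x Hx).
  - intros F f g _ Hf [<-|[]] Hle. simpl in Hle.
    apply (lt_irr W (succ W NM (proj1_sig f))). eapply le_lt_trans; [exact Hle|].
    eapply le_lt_trans; [apply minl_le; eauto|apply succ_gt].
  - intros F F' _ Hi g' [<-|[]]. exists (minl F); split; [simpl; auto|]. simpl.
    destruct (minl_in F) as [E|[x [Hx E]]]; rewrite E.
    + apply minl_le_w.
    + apply minl_le; auto.
Qed.
End OrdSys.

Lemma sys_iso X Y T psi G : wpo_iso X Y -> Sys Y (fun _ => True) T psi G ->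
  exists psi' G', Sys X (fun _ => True) T psi' G'.
Proof.
  intros [f [Hf _]] HS. eexists; eexists. apply (sys_transport X Y T (fun _ => True) (fun _ => True) psi G f HS); auto.
  intros x y; apply Hf.
Qed.

Lemma lower_sys (e : expr) : forall X, approx e X -> exists psi G, Sys X (fun _ => True) (interp e) psi G.
Proof.
  induction e as [W m g|e1 IH1 e2 IH2|e1 IH1 e2 IH2|e1 IH1|e1 IH1|e1 IH1]; simpl; intros X HX.
  - destruct HX as [w Hw]. exact (sys_iso X (segQO W w) (wordQO W) _ _ Hw (sys_ord W (no_max W m g) w)).
  - destruct HX as [A [B [HA [HB Hi]]]].
    destruct (IH1 A HA) as [p1 [G1 S1]]; destruct (IH2 B HB) as [p2 [G2 S2]].
    exact (sys_iso X (sumQO A B) (sumQO (interp e1) (interp e2)) _ _ Hi (sys_sum _ _ _ _ _ _ _ _ S1 S2)).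
  - destruct HX as [A [B [HA [HB Hi]]]].
    destruct (IH1 A HA) as [p1 [G1 S1]]; destruct (IH2 B HB) as [p2 [G2 S2]].
    exact (sys_iso X (prodQO A B) (prodQO (interp e1) (interp e2)) _ _ Hi (sys_prod _ _ _ _ _ _ _ _ S1 S2)).
  - destruct HX as [A [n [HA Hi]]]. destruct (IH1 A HA) as [p1 [G1 S1]].
    destruct (sys_star _ _ _ _ S1 n) as [G' S']. exact (sys_iso X _ (starQO (interp e1)) _ _ Hi S').
  - destruct HX as [A [n [HA Hi]]]. destruct (IH1 A HA) as [p1 [G1 S1]].
    destruct (sys_mset _ _ _ _ S1 n) as [G' S']. exact (sys_iso X _ (msetQO (interp e1)) _ _ Hi S').
  - destruct HX as [A [HA Hi]]. destruct (IH1 A HA) as [p1 [G1 S1]].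
    exact (sys_iso X _ (pfQO (interp e1)) _ _ Hi (sys_pf _ _ _ _ S1)).
Qed.


Definition inL {A : qo} (L : list A) (x : A) := exists l, In l L /\ qle x l.

Definition Cover (e : expr) (L : list (interp e)) (k : nat) : Prop :=
  exists (E' : qo) (phi : interp e -> E') (c : list E'),
    approx e E' /\ length c = k /\
    (forall x y, inL L x -> inL L y -> qle (phi x) (phi y) -> qle x y) /\
    (forall x ci, inL L x -> In ci c -> ~ qle (phi x) ci) /\
    bad c.

Lemma iso_refl (X : qo) : reflQ X -> wpo_iso X X.
Proof. intros R; exists (fun x => x); split; [tauto|]. intro b; exists b; split; apply R. Qed.

Lemma bad_map (A B : qo) (f : A -> B) l : (forall x y, qle (f x) (f y) -> qle x y) -> bad l -> bad (map f l).
Proof.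
  intros Hf; induction l as [|a l IH]; simpl; auto. intros [H1 H2]; split; auto.
  intros y Hy Hle. apply in_map_iff in Hy as [b [<- Hb]]. apply (H1 b Hb); auto.
Qed.

Section OrdCover.
Variable W : word.
Variable NM : forall x : W, exists y, wlt W x y.
Variable z0 : W.
Variable Hz0 : forall y, wle W z0 y.
Variable w' : W.
Variable Hw' : wlt W z0 w'.

Definition mk (v : W) : seg W w' :=
  match excluded_middle_informative (wlt W v w') with
  | left p => exist _ v p
  | right _ => exist _ z0 Hw'
  end.

Lemma mk_val v : wlt W v w' -> proj1_sig (mk v) = v.
Proof. intros H; unfold mk; destruct (excluded_middle_informative _); simpl; tauto. Qed.

Fixpoint cs (k : nat) : list (seg W w') :=
  match k with 0 => [] | S i => mk (sk W NM i z0) :: cs i end.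

Lemma cs_in k ci : In ci (cs k) -> exists i, i < k /\ ci = mk (sk W NM i z0).
Proof.
  induction k as [|k IH]; simpl; [tauto|]. intros [<-|H]; [exists k; auto|].
  destruct (IH H) as [i [Hi ->]]; exists i; split; auto.
Qed.

Lemma cs_len k : length (cs k) = k. Proof. induction k; simpl; auto. Qed.
End OrdCover.

Lemma bound_list (W : word) (L : list W) (d : W) : exists b, wle W d b /\ forall l, In l L -> wle W l b.
Proof.
  induction L as [|a L [b [Hd Hb]]]; [exists d; split; [apply wle_refl|intros _ []]|].
  destruct (wle_total W a b) as [H|H].
  - exists b; split; auto. intros l [<-|Hl]; auto.
  - exists a; split; [eapply wle_trans; eauto|]. intros l [<-|Hl]; [apply wle_refl|eapply wle_trans; eauto].
Qed.

Lemma cover_ord (W : word) (m : mult_indec W) (g : ge_omega_omega W) (L : list W) k :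
  Cover (EOrd W m g) L k.
Proof.
  pose proof (no_max W m g) as NM.
  destruct g as [gg Hgg].
  destruct (wf_min W (fun _ => True)) as [z0 [_ Hz0]]; [exists (gg (exist noninc [] I)); auto|].
  assert (Hz : forall y, wle W z0 y) by (intro y; apply Hz0; auto).
  destruct (bound_list W L z0) as [b [Hb0 Hb]].
  set (w' := succ W NM (sk W NM k b)).
  assert (Hsk : forall x, wle W x b -> forall i, i <= k -> wlt W (sk W NM i x) w').
  { intros x Hx i Hi. eapply le_lt_trans; [|apply succ_gt].
    eapply wle_trans; [apply sk_mono; exact Hx|].
    destruct (PeanoNat.Nat.eq_dec i k) as [->|Hne]; [apply wle_refl|apply lt_le, sk_lt; lia]. }
  assert (Hw' : wlt W z0 w') by (eapply le_lt_trans; [apply (sk_ge W NM 0 z0)|apply (Hsk z0 Hb0 0); lia]).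
  exists (segQO W w'), (fun x => mk W z0 w' Hw' (sk W NM k x)), (cs W NM z0 w' Hw' k).
  split; [exists w'; apply iso_refl; intro; apply wle_refl|].
  split; [apply cs_len|].
  assert (Hin : forall x, @inL (wordQO W) L x -> wle W x b).
  { intros x [l [Hl Hxl]]. eapply wle_trans; eauto. }
  split; [|split].
  - intros x y Hx Hy Hle. simpl in Hle.
    rewrite !mk_val in Hle by (apply Hsk; auto). eapply sk_refl; eauto.
  - intros x ci Hx Hci Hle. apply cs_in in Hci as [i [Hi ->]]. simpl in Hle.
    rewrite !mk_val in Hle by (apply Hsk; auto; lia).
    apply (lt_irr W (sk W NM i z0)). eapply le_lt_trans; [apply sk_mono; apply Hz|].
    eapply lt_le_trans; [apply sk_lt; exact Hi|]. exact Hle.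
  - assert (Hj : forall j, j <= k -> @bad (segQO W w') (cs W NM z0 w' Hw' j)); [|apply Hj; auto].
    induction j as [|j IH]; simpl; auto. intros Hj; split; [|apply IH; lia].
    intros y Hy Hle. apply cs_in in Hy as [i [Hi ->]]. simpl in Hle.
    rewrite !mk_val in Hle by (apply Hsk; auto; lia).
    apply (lt_irr W (sk W NM i z0)). eapply lt_le_trans; [apply sk_lt; exact Hi|exact Hle].
Qed.

Lemma cover_sum e1 e2 : (forall L k, Cover e1 L k) -> (forall L k, Cover e2 L k) ->
  forall L k, Cover (ESum e1 e2) L k.
Proof.
  intros C1 C2 L k.
  destruct (C1 (lefts L) k) as [A [f1 [c1 [HA [Hl [R1 [N1 B1]]]]]]].
  destruct (C2 (rights L) k) as [B [f2 [c2 [HB [_ [R2 [N2 _]]]]]]].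
  destruct (approx_good _ _ HA) as [_ [_ RA]]. destruct (approx_good _ _ HB) as [_ [_ RB]].
  exists (sumQO A B), (fun x => match x with inl a => inl (f1 a) | inr b => inr (f2 b) end), (map inl c1).
  split; [exists A, B; split; [|split]; auto; apply iso_refl; intros [a|b]; simpl; auto|].
  split; [rewrite length_map; auto|].
  assert (HLl : forall a, @inL (sumQO (interp e1) (interp e2)) L (inl a) -> inL (lefts L) a).
  { intros a [[l|l] [Hl' Hle]]; simpl in Hle; [|contradiction]. exists l; split; auto. apply in_lefts; auto. }
  assert (HLr : forall a, @inL (sumQO (interp e1) (interp e2)) L (inr a) -> inL (rights L) a).
  { intros a [[l|l] [Hl' Hle]]; simpl in Hle; [contradiction|]. exists l; split; auto. apply in_rights; auto. }
  split; [|split].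
  - intros [a|a] [b|b] Hx Hy Hle; simpl in *; try contradiction; auto.
  - intros [a|a] ci Hx Hci Hle; apply in_map_iff in Hci as [c [<- Hc]]; simpl in Hle; [|contradiction].
    apply (N1 a c); auto.
  - apply bad_map; auto.
Qed.

Lemma cover_prod e1 e2 : (forall L k, Cover e1 L k) -> (forall L k, Cover e2 L k) ->
  forall L k, Cover (EProd e1 e2) L k.
Proof.
  intros C1 C2 L k.
  destruct (C1 (map fst L) k) as [A [f1 [c1 [HA [Hl [R1 [N1 B1]]]]]]].
  destruct (C2 (map snd L) 1) as [B [f2 [c2 [HB [Hl2 [R2 [N2 _]]]]]]].
  destruct c2 as [|d [|]]; try discriminate.
  destruct (approx_good _ _ HA) as [_ [_ RA]]. destruct (approx_good _ _ HB) as [_ [_ RB]].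
  exists (prodQO A B), (fun x => (f1 (fst x), f2 (snd x))), (map (fun x => (x, d)) c1).
  split; [exists A, B; split; [|split]; auto; apply iso_refl; intros [a b]; simpl; auto|].
  split; [rewrite length_map; auto|].
  assert (H1 : forall x, @inL (prodQO (interp e1) (interp e2)) L x -> inL (map fst L) (fst x)).
  { intros x [l [Hl' [Hle _]]]. exists (fst l); split; auto. apply in_map; auto. }
  assert (H2 : forall x, @inL (prodQO (interp e1) (interp e2)) L x -> inL (map snd L) (snd x)).
  { intros x [l [Hl' [_ Hle]]]. exists (snd l); split; auto. apply in_map; auto. }
  split; [|split].
  - intros x y Hx Hy [Ha Hb]; simpl in *. split; auto.
  - intros x ci Hx Hci [Hle _]; apply in_map_iff in Hci as [c [<- Hc]]; simpl in Hle.
    apply (N1 (fst x) c); auto.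
  - apply bad_map; auto. intros x y [H _]; auto.
Qed.

Definition nmax {A : Type} (L : list (list A)) : nat := fold_right (fun l m => Nat.max (length l) m) 0 L.
Lemma nmax_ge {A : Type} (L : list (list A)) l : In l L -> length l <= nmax L.
Proof. induction L as [|a L IH]; simpl; [tauto|]. intros [<-|H]; [lia|specialize (IH H); lia]. Qed.

Definition pad {A : Type} (n : nat) (m : A) (l : list A) := firstn n (l ++ repeat m n).
Lemma pad_length {A : Type} n (m : A) l : length (pad n m l) = n.
Proof. unfold pad; rewrite length_firstn, length_app, repeat_length; lia. Qed.
Lemma pad_eq {A : Type} n (m : A) l : length l <= n -> pad n m l = l ++ repeat m (n - length l).
Proof.
  intros H; unfold pad; rewrite firstn_app, firstn_all2 by lia. f_equal.
  assert (G : forall k j, k <= j -> firstn k (repeat m j) = repeat m k).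
  { induction k as [|k IH]; intros [|j] Hj; simpl; auto; [lia|]. f_equal; apply IH; lia. }
  apply G; lia.
Qed.

Lemma mset_perm_r (A : qo) u v v' : mset_emb A u v -> Permutation v v' -> mset_emb A u v'.
Proof.
  intros H HP; apply mset_char in H as [w [r [P F]]]; apply mset_char.
  exists w, r; split; auto. apply (Permutation_trans (Permutation_sym HP)); auto.
Qed.

Section PadCover.
Variables (E A : qo) (f1 : E -> A) (m : A) (D : E -> Prop).
Hypothesis R1 : forall x y, D x -> D y -> qle (f1 x) (f1 y) -> qle x y.
Hypothesis N1 : forall x, D x -> ~ qle (f1 x) m.

Lemma pad_reflect u : forall v k1 k2, (forall a, In a u -> D a) -> (forall b, In b v -> D b) ->
  Forall2 (@qle A) (map f1 u ++ repeat m k1) (map f1 v ++ repeat m k2) -> subword E u v.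
Proof.
  induction u as [|a u IH]; intros v k1 k2 Hu Hv H; [constructor|].
  destruct v as [|b v].
  - simpl in H. destruct k2; simpl in H; inversion H; subst. exfalso; eapply (N1 a); [apply Hu; simpl; auto|eassumption].
  - simpl in H; inversion H; subst. constructor.
    + apply R1; [apply Hu|apply Hv|]; simpl; auto.
    + apply (IH v k1 k2); auto; intros; [apply Hu|apply Hv]; simpl; auto.
Qed.

Lemma mpad_reflect u v k1 k2 : (forall a, In a u -> D a) -> (forall b, In b v -> D b) ->
  mset_emb A (m :: map f1 u ++ repeat m k1) (m :: map f1 v ++ repeat m k2) -> mset_emb E u v.
Proof.
  intros Hu Hv H.
  apply mset_perm_l with (u' := map f1 u ++ m :: repeat m k1) in H; [|apply Permutation_middle].
  apply mset_app_l in H.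
  apply mset_perm_r with (v' := map f1 v ++ (m :: repeat m k2)) in H; [|apply Permutation_middle].
  apply mset_drop_junk in H.
  - apply mset_map_reflect in H; auto.
  - intros x j Hx Hj. apply in_map_iff in Hx as [a [<- Ha]].
    assert (j = m) as -> by (destruct Hj as [<-|Hj]; auto; apply repeat_spec in Hj; auto).
    apply N1; auto.
Qed.
End PadCover.

Lemma cover_star e1 : (forall L k, Cover e1 L k) -> forall L k, Cover (EStar e1) L k.
Proof.
  intros C1 L k.
  destruct (C1 (concat L) (S k)) as [A [f1 [c1 [HA [Hl [R1 [N1 B1]]]]]]].
  destruct c1 as [|m c']; [discriminate|]. simpl in Hl. injection Hl as Hl.
  destruct B1 as [Bm B']. set (n := nmax L).
  destruct (approx_good _ _ HA) as [_ [_ RA]].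
  assert (Lp : forall u, length (m :: pad n m (map f1 u)) = S n) by (intro; simpl; rewrite pad_length; auto).
  assert (Lr : forall x : A, length (x :: repeat x n) = S n) by (intro; simpl; rewrite repeat_length; auto).
  exists (powQO A (S n)), (fun u => exist (fun l => length l = S n) _ (Lp u)), (map (fun x => exist (fun l => length l = S n) _ (Lr x)) c').
  split; [exists A, (S n); split; auto; apply iso_refl; intro x; simpl; apply Forall2_refl'; auto|].
  split; [rewrite length_map; auto|].
  assert (Hin : forall u, @inL (starQO (interp e1)) L u -> length u <= n /\ forall a, In a u -> inL (concat L) a).
  { intros u [w [Hw Hle]]. split.
    - eapply PeanoNat.Nat.le_trans; [apply subword_length; eauto|apply nmax_ge; auto].
    - intros a Ha. destruct (subword_in _ _ _ Hle a Ha) as [b [Hb Hab]]. exists b; split; auto.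
      apply in_concat; eauto. }
  assert (Nm : forall x, inL (concat L) x -> ~ qle (f1 x) m) by (intros; apply N1; simpl; auto).
  split; [|split].
  - intros u v Hu Hv Hle. simpl in Hle. inversion Hle as [|? ? ? ? _ H2]; subst.
    destruct (Hin u Hu) as [Lu Du]; destruct (Hin v Hv) as [Lv Dv].
    rewrite !pad_eq in H2 by (rewrite length_map; auto).
    eapply pad_reflect; eauto.
  - intros u ci Hu Hci Hle. apply in_map_iff in Hci as [x [<- Hx]]. simpl in Hle.
    inversion Hle; subst. apply (Bm x); auto.
  - apply bad_map; auto. intros x y Hle; simpl in Hle; inversion Hle; auto.
Qed.

Lemma cover_mset e1 : (forall L k, Cover e1 L k) -> forall L k, Cover (EMset e1) L k.
Proof.
  intros C1 L k.
  destruct (C1 (concat L) (S k)) as [A [f1 [c1 [HA [Hl [R1 [N1 B1]]]]]]].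
  destruct c1 as [|m c']; [discriminate|]. simpl in Hl. injection Hl as Hl.
  destruct B1 as [Bm B']. set (n := nmax L).
  destruct (approx_good _ _ HA) as [_ [TA RA]].
  assert (Lp : forall u, length (m :: pad n m (map f1 u)) = S n) by (intro; simpl; rewrite pad_length; auto).
  assert (Lr : forall x : A, length (x :: repeat x n) = S n) by (intro; simpl; rewrite repeat_length; auto).
  exists (msetnQO A (S n)), (fun u => exist (fun l => length l = S n) _ (Lp u)), (map (fun x => exist (fun l => length l = S n) _ (Lr x)) c').
  split; [exists A, (S n); split; auto; apply iso_refl; intro x; simpl; apply mset_refl; auto|].
  split; [rewrite length_map; auto|].
  assert (Hin : forall u, @inL (msetQO (interp e1)) L u -> length u <= n /\ forall a, In a u -> inL (concat L) a).
  { intros u [w [Hw Hle]]. split.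
    - eapply PeanoNat.Nat.le_trans; [apply mset_length; eauto|apply nmax_ge; auto].
    - intros a Ha. destruct (mset_in _ _ _ Hle a Ha) as [b [Hb Hab]]. exists b; split; auto.
      apply in_concat; eauto. }
  assert (Nm : forall x, inL (concat L) x -> ~ qle (f1 x) m) by (intros; apply N1; simpl; auto).
  split; [|split].
  - intros u v Hu Hv Hle. simpl in Hle.
    destruct (Hin u Hu) as [Lu Du]; destruct (Hin v Hv) as [Lv Dv].
    rewrite !pad_eq in Hle by (rewrite length_map; auto).
    eapply mpad_reflect; eauto.
  - intros u ci Hu Hci Hle. apply in_map_iff in Hci as [x [<- Hx]]. simpl in Hle.
    destruct (mset_in _ _ _ Hle m (or_introl eq_refl)) as [y [Hy Hmy]].
    assert (y = x) as -> by (destruct Hy as [<-|Hy]; auto; apply repeat_spec in Hy; auto).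
    apply (Bm x); auto.
  - apply bad_map; auto. intros x y Hle; simpl in Hle.
    destruct (mset_in _ _ _ Hle x (or_introl eq_refl)) as [z [Hz Hxz]].
    assert (z = y) as -> by (destruct Hz as [<-|Hz]; auto; apply repeat_spec in Hz; auto). auto.
Qed.

Lemma cover_pf e1 : (forall L k, Cover e1 L k) -> forall L k, Cover (EPf e1) L k.
Proof.
  intros C1 L k.
  destruct (C1 (concat L) (S k)) as [A [f1 [c1 [HA [Hl [R1 [N1 B1]]]]]]].
  destruct c1 as [|m c']; [discriminate|]. simpl in Hl. injection Hl as Hl.
  destruct B1 as [Bm B'].
  destruct (approx_good _ _ HA) as [_ [TA RA]].
  exists (pfQO A), (fun T => m :: map f1 T), (map (fun x => [x]) c').
  split; [exists A; split; auto; apply iso_refl; apply hoare_refl; auto|].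
  split; [rewrite length_map; auto|].
  assert (Hin : forall T, @inL (pfQO (interp e1)) L T -> forall a, In a T -> inL (concat L) a).
  { intros T [S [HS Hle]] a Ha. destruct (Hle a Ha) as [b [Hb Hab]]. exists b; split; auto.
    apply in_concat; eauto. }
  split; [|split].
  - intros T T' HT HT' Hle a Ha.
    destruct (Hle (f1 a)) as [b [Hb Hab]]; [simpl; right; apply in_map; auto|].
    destruct Hb as [<-|Hb].
    + exfalso; exact (N1 a m (Hin T HT a Ha) (or_introl eq_refl) Hab).
    + apply in_map_iff in Hb as [a' [<- Ha']]. exists a'; split; auto.
      apply R1; [exact (Hin T HT a Ha)|exact (Hin T' HT' a' Ha')|exact Hab].
  - intros T ci HT Hci Hle. apply in_map_iff in Hci as [x [<- Hx]].
    destruct (Hle m (or_introl eq_refl)) as [y [[E|[]] Hmy]]. subst y. apply (Bm x); auto.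
  - apply bad_map; auto. intros x y Hle.
    destruct (Hle x (or_introl eq_refl)) as [z [[E|[]] Hxz]]; subst z; auto.
Qed.

Lemma cover_all (e : expr) : forall L k, Cover e L k.
Proof.
  induction e as [W m g|e1 IH1 e2 IH2|e1 IH1 e2 IH2|e1 IH1|e1 IH1|e1 IH1].
  - apply cover_ord.
  - apply cover_sum; auto.
  - apply cover_prod; auto.
  - apply cover_star; auto.
  - apply cover_mset; auto.
  - apply cover_pf; auto.
Qed.


Lemma sc_inv_some (P : qo -> Prop) (F : forall A : qo, list A -> list A -> Prop) y p :
  sup_child P F y (Some p) ->
  exists t', y = Some (existT _ (projT1 p) t') /\ F (projT1 (projT1 p)) t' (projT2 p).
Proof.
  intros H. remember (Some p) as z eqn:Ez. destruct H as [X|X s t Hf]; [discriminate|].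
  injection Ez as <-. simpl. exists t; split; auto.
Qed.

Lemma sc_inv_none (P : qo -> Prop) (F : forall A : qo, list A -> list A -> Prop) y :
  sup_child P F y None -> exists X, y = Some (existT _ X []).
Proof.
  intros H. remember None as z eqn:Ez. destruct H as [X|X s t Hf]; [eauto|discriminate].
Qed.

Lemma acc_sc (P : qo -> Prop) (F : forall A : qo, list A -> list A -> Prop) X t :
  Acc (F (projT1 X)) t -> Acc (sup_child P F) (Some (existT _ X t)).
Proof.
  induction 1 as [t _ IH]. constructor. intros y Hy.
  apply sc_inv_some in Hy as [t' [-> Hf]]. simpl in *. apply IH; auto.
Qed.

Lemma sdecr_snoc (A : qo) (s : list A) x : sdecr s -> (forall y, In y s -> qlt x y) -> sdecr (s ++ [x]).
Proof.
  induction s as [|a s IH]; simpl; intros Hs Hx.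
  - split; auto. intros y [].
  - destruct Hs as [H1 H2]. split; [|apply IH; auto].
    intros y Hy. apply in_app_or in Hy as [Hy|[<-|[]]]; auto.
Qed.

Lemma sdecr_last2 (A : qo) (pre : list A) a b : sdecr (pre ++ [a; b]) -> qlt b a.
Proof.
  induction pre as [|c pre IH]; simpl.
  - intros [H _]; apply H; simpl; auto.
  - intros [_ H]; auto.
Qed.

Section Upper.
Variable e : expr.
Let E := interp e.
Variable S0 : list E.
Variable E' : qo.
Variable phi : E -> E'.
Variable HA : approx e E'.
Hypothesis R : forall x y, inL S0 x -> inL S0 y -> qle (phi x) (phi y) -> qle x y.
Hypothesis TE : transQ E.
Let X : {E'' : qo & approx e E''} := existT _ E' HA.

Definition SimU (s : list (pfQO E)) (node : sup_node (approx e)) : Prop :=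
  exists Sl xs pre, s = pre ++ [Sl] /\ node = Some (existT _ X (map phi xs)) /\
    bad (map phi xs) /\ (forall a, In a Sl -> inL S0 a) /\ (forall x, In x xs -> inL S0 x) /\
    (forall x y, In x xs -> In y Sl -> ~ qle x y).

Lemma upper_sim : forall node, Acc (sup_child (approx e) o_child) node ->
  forall s, SimU s node -> rank_le (h_child (pfQO E)) (sup_child (approx e) o_child) s node.
Proof.
  intros node Hacc; induction Hacc as [node _ IH]; intros s [Sl [xs [pre [-> [-> [Hb [HSl [Hxs Hn]]]]]]]].
  constructor. intros s' [[S' ->] Hsd].
  rewrite <- app_assoc in Hsd. simpl in Hsd. apply sdecr_last2 in Hsd as [Hle Hnle].
  assert (Hx : exists x, In x Sl /\ forall y, In y S' -> ~ qle x y).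
  { apply NNPP; intro H. apply Hnle. intros a Ha. apply NNPP; intro H2. apply H. exists a; split; auto.
    intros y Hy Hay; apply H2; eauto. }
  destruct Hx as [x [HxSl HxS']].
  assert (Hbad : bad (map phi (xs ++ [x]))).
  { rewrite map_app; apply bad_snoc; auto. intros a Ha Hle'. apply in_map_iff in Ha as [xi [<- Hxi]].
    apply (Hn xi x Hxi HxSl). apply R; auto. }
  exists (Some (existT _ X (map phi (xs ++ [x])))). split.
  - constructor. split; auto. exists (phi x); rewrite map_app; auto.
  - apply IH.
    + constructor. split; auto. exists (phi x); rewrite map_app; auto.
    + exists S', (xs ++ [x]), (pre ++ [Sl]). split; [rewrite <- app_assoc; auto|].
      split; auto. split; auto. split; [|split].
      * intros a Ha. destruct (Hle a Ha) as [b [Hb2 Hab]]. destruct (HSl b Hb2) as [l [Hl Hbl]].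
        exists l; split; eauto.
      * intros y Hy; apply in_app_or in Hy as [Hy|[<-|[]]]; auto.
      * intros y z Hy Hz Hyz. apply in_app_or in Hy as [Hy|[<-|[]]].
        -- destruct (Hle z Hz) as [w [Hw Hzw]]. apply (Hn y w Hy Hw). eauto.
        -- apply (HxS' z Hz Hyz).
Qed.
End Upper.

Section Lower.
Variable e : expr.
Let E := interp e.
Variable X : {E'' : qo & approx e E''}.
Variable psi : projT1 X -> E.
Variable G : list (projT1 X) -> list E.
Hypothesis HS : Sys (projT1 X) (fun _ => True) E psi G.
Hypothesis TE : transQ E.

Definition SimL (node : sup_node (approx e)) (s : list (pfQO E)) : Prop :=
  exists t, node = Some (existT _ X t) /\ bad t /\ sdecr s /\
    (forall S, In S s -> exists t1 t2, t = t1 ++ t2 /\ S = G t1).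

Lemma lower_sim : forall node, Acc (sup_child (approx e) o_child) node ->
  forall s, SimL node s -> rank_le (sup_child (approx e) o_child) (h_child (pfQO E)) node s.
Proof.
  destruct HS as [HA [HB HC]].
  intros node Hacc; induction Hacc as [node _ IH]; intros s [t [-> [Hb [Hsd Hpre]]]].
  constructor. intros node' Hn. apply sc_inv_some in Hn as [t' [-> [[y ->] Hb']]]. simpl in *.
  assert (Hq : forall S, In S s -> @qlt (pfQO E) (G (t ++ [y])) S).
  { intros S HSs. destruct (Hpre S HSs) as [t1 [t2 [-> ->]]]. split.
    - intros g' Hg'.
      assert (Hi : incl t1 ((t1 ++ t2) ++ [y])) by (intros z Hz; rewrite <- app_assoc; apply in_or_app; auto).
      destruct (HC t1 ((t1 ++ t2) ++ [y]) (fun _ _ => I) Hi g' Hg') as [g [Hg Hle]]; eauto.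
    - intros Hle.
      destruct (HA t1 y) as [g [Hg Hpg]]; auto.
      { intros f Hf. apply (bad_app _ _ _ Hb'). apply in_or_app; auto. }
      destruct (Hle g Hg) as [g' [Hg' Hgg']].
      apply (HB ((t1 ++ t2) ++ [y]) y g'); auto.
      + apply in_or_app; simpl; auto.
      + eapply TE; eauto. }
  exists (s ++ [G (t ++ [y])]). split.
  - split; [eauto|]. apply sdecr_snoc; auto.
  - apply IH.
    + constructor. split; eauto.
    + exists (t ++ [y]); split; auto. split; auto. split; [apply sdecr_snoc; auto|].
      intros S HSs. apply in_app_or in HSs as [HSs|[<-|[]]].
      * destruct (Hpre S HSs) as [t1 [t2 [-> ->]]]. exists t1, (t2 ++ [y]). rewrite app_assoc; auto.
      * exists (t ++ [y]), []; rewrite app_nil_r; auto.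
Qed.
End Lower.

Theorem mainTheorem14 (e : expr) :
  normal_form e ->
  rank_eq (h_child (interp (EPf e))) (sup_child (approx e) o_child)
          (@nil (interp (EPf e))) None.
Proof.
  intros _. destruct (interp_rt e) as [RE TE]. split.
  - constructor. intros a' [[S0 Ea'] Hsd]. simpl in Ea'. subst a'.
    destruct (cover_all e S0 0) as [E' [phi [c [HA [_ [R _]]]]]].
    set (X := existT (fun E'' => approx e E'') E' HA).
    exists (Some (existT _ X [])). split; [constructor|].
    apply (upper_sim e S0 E' phi HA R TE).
    + apply acc_sc. simpl. destruct (approx_good _ _ HA) as [W _]. apply wqo_acc; auto.
    + exists S0, [], []. split; auto. split; auto. split; [simpl; auto|]. split; [|split].
      * intros a Ha; exists a; split; auto.
      * intros x [].
      * intros x y [].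
  - constructor. intros a' Ha'. apply sc_inv_none in Ha' as [X ->].
    destruct (lower_sys e (projT1 X) (projT2 X)) as [psi [G HS]].
    exists [G []]. split.
    + split; [exists (G []); auto|]. simpl; split; auto. intros y [].
    + apply (lower_sim e X psi G HS TE).
      * apply acc_sc. destruct (approx_good _ _ (projT2 X)) as [W _]. apply wqo_acc; auto.
      * exists []; split; auto. split; [simpl; auto|]. split; [simpl; split; auto; intros y []|].
        intros S [<-|[]]. exists [], []; auto.
Qed.
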